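(* Let $a>0$, $\theta\ge 0$, $L>0$ and $\lambda\in(\tfrac12,1)$ be given. Assume that the feedback parameter $k$ satisfies $$k\ge \max\Big\{1,\ \tfrac43\Big(\tfrac1a+\tfrac1{a^2}\Big),\ \tfrac{1}{\lambda a}\Big\}.$$ Define $$\mu=\frac{1}{4\,\mathrm{e}\,L\,k},\qquad C_0=12k+4(k+1)\Big(18+13\theta+\tfrac{1}{a^2}(8+6\theta)\Big)+10,$$ $$M_1=\min\Big\{\tfrac34 k a^2-a-1,\ k-1\Big\},\qquad K_1=\frac{1+2L^2}{M_1}.$$ Let $\bar u\in C^1([0,L])$ with $\bar u(x)>0$ be a stationary state, i.e. a solution of $\bar u_x=\frac{\theta}{2}\,\frac{|\bar u|\,\bar u^2}{a^2-\bar u^2}$, and assume that for all $x\in[0,L]$ $$\bar u(x)\le \min\Big\{1,\ \tfrac{1}{4k\mathrm{e}},\ (1-\lambda)\tfrac a2,\ \tfrac{\mu}{C_0K_1}\Big\},\qquad \bar u_x(x)\le \min\Big\{1,\ \tfrac{\mu}{C_0K_1}\Big\}.$$ Let $T_{period}>0$ and $T>T_{period}$ be given, and let $\omega$ be fixed with $b(\cdot,\omega)\in C^2([0,T])$. Let $u\in C^2([0,T]\times[0,L])$ be a solution of the system $$\begin{cases} u(0,x)=\varphi(x),\quad u_t(0,x)=\psi(x), & x\in[0,L],\\ u_{tt}+2(\bar u+u)u_{tx}-\big(a^2-(\bar u+u)^2\big)u_{xx}=F(x,u,u_x,u_t) & \text{on }[0,T]\times[0,L],\\ u_x(t,0)=k\,u_t(t,0),\quad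 u(t,L)=b(t,\omega), & t\in[0,T],\end{cases}$$ (with $C^2$ initial data $\varphi\in C^2([0,L])$, $\psi\in C^1([0,L])$ compatible with the boundary conditions), where $$F=\tilde F(u+\bar u,\,u_x+\bar u_x,\,u_t)-\frac{a^2-(\bar u+u)^2}{a^2-\bar u^2}\,\tilde F(\bar u,\bar u_x,0),$$ $$\tilde F(v,v_x,v_t)=-2v_tv_x-2v\,v_x^2-\tfrac32\theta\, v|v|\,v_x-\theta|v|\,v_t,$$ and assume this solution satisfies on $[0,T]\times[0,L]$ $$|u|\le\min\Big\{\bar u(0),\ (1-\lambda)\tfrac a2,\ \tfrac{1}{4k\mathrm{e}}\Big\},\qquad \max\{|u|,|u_x|,|u_t|\}\le\min\Big\{1,\ \tfrac{\mu}{C_0K_1}\Big\}.$$ Assume that there exist $\nu>\mu$ and $C_\nu>0$ such that for all $t\in(T_{period},T)$ $$\int_{t-T_{period}}^t |b(\tau,\omega)|^2+|b_t(\tau,\omega)|^2\,d\tau\le C_\nu\exp(-\nu t),$$ and set $\delta=\nu-\mu>0$ and $C_g=\Big(\tfrac43\mathrm{e}\,a^2k^2+\tfrac{1}{2\mathrm{e}K_1k}\Big)C_\nu$. Define $$E_1(t)=\int_0^L k\Big[\big(a^2-(\bar u+u)^2\big)u_x^2+u_t^2\Big]-2\exp\Big(-\tfrac xL\Big)\Big[(\bar u+u)u_x^2+u_tu_x\Big]dx,\qquad E(t)=\int_{t-T_{period}}^tE_1(\tau)\,d\tau .$$ Then for all $t\in(T_{period},T)$ $$E(t)\le \exp\big(-\mu(t-T_{period})\big)\Big[E(T_{period})+\frac{C_g}{\delta}\Big].$$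 Moreover, if $b(t,\omega)=0$ for all $t\ge T-T_{period}$, then $$\|u\|^2_{H^1((T-T_{period},T)\times(0,L))}\le K_1\exp\big(-\mu(T-T_{period})\big)\Big[E(T_{period})+\frac{C_g}{\delta}\Big].$$
   Context: The system models subsonic isothermal gas flow in a pipe of length $L$: $u=\tilde u-\bar u$ is the deviation of the gas velocity $\tilde u$ from a stationary velocity profile $\bar u$, $a>0$ is the speed of sound, $\theta\ge0$ a friction coefficient, $k>0$ the feedback parameter of the Neumann feedback at $x=0$, and $b(t,\omega)$ models uncertain customer behavior at $x=L$ depending on an uncertain parameter $\omega$. $\mathrm{e}$ denotes Euler's number. *)

(* Defs.v *)
From Stdlib Require Import Reals.
From Coquelicot Require Import Coquelicot.
Open Scope R_scope.

Definition pt (u : R -> R -> R) (t x : R) : R := Derive (fun s => u s x) t.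
Definition px (u : R -> R -> R) (t x : R) : R := Derive (fun y => u t y) x.

Definition cont2 (f : R -> R -> R) (t x : R) : Prop :=
  continuous (fun p : R * R => f (fst p) (snd p)) (t, x).

Definition C2_2d (u : R -> R -> R) : Prop :=
  forall t x,
    ex_derive (fun s => u s x) t /\ ex_derive (fun y => u t y) x /\
    ex_derive (fun s => pt u s x) t /\ ex_derive (fun y => pt u t y) x /\
    ex_derive (fun s => px u s x) t /\ ex_derive (fun y => px u t y) x /\
    cont2 u t x /\ cont2 (pt u) t x /\ cont2 (px u) t x /\
    cont2 (pt (pt u)) t x /\ cont2 (px (pt u)) t x /\
    cont2 (pt (px u)) t x /\ cont2 (px (px u)) t x.

Definition C1_1d (f : R -> R) : Prop :=
  forall x, ex_derive f x /\ continuous (Derive f) x.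
Definition C2_1d (f : R -> R) : Prop :=
  forall x, ex_derive f x /\ ex_derive (Derive f) x /\
            continuous (Derive (Derive f)) x.

Definition Ftilde (theta v vx vt : R) : R :=
  - 2 * vt * vx - 2 * v * vx ^ 2 - 3 / 2 * theta * v * Rabs v * vx
  - theta * Rabs v * vt.

Definition E1 (a k L : R) (ubar : R -> R) (u : R -> R -> R) (t : R) : R :=
  RInt (fun x =>
    k * ((a ^ 2 - (ubar x + u t x) ^ 2) * (px u t x) ^ 2 + (pt u t x) ^ 2)
    - 2 * exp (- (x / L)) * ((ubar x + u t x) * (px u t x) ^ 2
                              + pt u t x * px u t x)) 0 L.

Definition Eint (a k L Tp : R) (ubar : R -> R) (u : R -> R -> R) (t : R) : R :=
  RInt (fun tau => E1 a k L ubar u tau) (t - Tp) t.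

(* squared H^1 norm on (t0,t1) x (0,L), written out for a C^1 function *)
Definition H1sq (u : R -> R -> R) (t0 t1 L : R) : R :=
  RInt (fun t => RInt (fun x => (u t x) ^ 2 + (pt u t x) ^ 2 + (px u t x) ^ 2) 0 L)
       t0 t1.

(* Main.v *)
From Stdlib Require Import Reals Lra Psatz.
From Coquelicot Require Import Coquelicot.
Require Import Defs.
Open Scope R_scope.

Lemma xabsx x y : Rabs (x * Rabs x - y * Rabs y) <= Rabs (x - y) * (Rabs x + Rabs y).
Proof.
unfold Rabs; repeat destruct Rcase_abs; nra.
Qed.

Lemma abs_le_mult x y X Y : Rabs x <= X -> Rabs y <= Y -> Rabs (x*y) <= X*Y.
Proof. intros. rewrite Rabs_mult. apply Rmult_le_compat; auto using Rabs_pos. Qed.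

Ltac absn := repeat first [ rewrite Rabs_Ropp | rewrite (Rabs_left (-2)) by lra
  | rewrite (Rabs_pos_eq 2) by lra | rewrite (Rabs_pos_eq (3/2)) by lra ].

Lemma F_bound a theta eta ub s u P Q :
  0 < a -> 0 <= theta -> 0 < eta <= 1 -> 0 < ub <= eta -> ub <= a/4 ->
  Rabs u <= eta -> Rabs u <= a/4 -> Rabs s <= eta -> Rabs P <= eta -> Rabs Q <= eta ->
  Rabs (Ftilde theta (u + ub) (P + s) Q
    - (a ^ 2 - (ub + u) ^ 2) / (a ^ 2 - ub ^ 2) * Ftilde theta ub s 0)
  <= eta * ((14 + 6 * theta) * Rabs P + (2 + 2 * theta) * Rabs Q
            + (12/5 + 24/5 * theta) * Rabs u).
Proof.
intros ha ht he hub hub4 hu hu4 hs hP hQ.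
set (w := ub + u).
assert (hw : Rabs w <= 2 * eta).
{ unfold w. apply Rle_trans with (Rabs ub + Rabs u). apply Rabs_triang.
  rewrite Rabs_pos_eq by lra. lra. }
assert (hwa : Rabs w <= a/2).
{ unfold w. apply Rle_trans with (Rabs ub + Rabs u). apply Rabs_triang.
  rewrite Rabs_pos_eq by lra. lra. }
assert (hA0 : a ^ 2 - ub ^ 2 >= 15/16 * a^2) by nra.
assert (hA0p : a ^ 2 - ub ^ 2 > 0) by nra.
set (A0 := a ^ 2 - ub ^ 2) in *.
set (rho := (a ^ 2 - w ^ 2) / A0).
assert (E1 : Ftilde theta (u + ub) (P + s) Q - rho * Ftilde theta ub s 0 =
  (-2 * Q * (P + s) - 2 * w * (P * P + 2 * P * s) - 3/2 * theta * (w * Rabs w) * P - theta * Rabs w * Q)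
  + (- 2 * s * s * (u * (1 + ub * (w + ub) / A0))
     - 3/2 * theta * s * ((w * Rabs w - ub * Rabs ub) + ub * Rabs ub * (u * (w + ub) / A0)))).
{ unfold Ftilde, rho. replace (u + ub) with w by (unfold w; ring).
  unfold w, A0. field. apply Rgt_not_eq; exact hA0p. }
fold w. fold rho. rewrite E1.
assert (B1 : Rabs (-2 * Q * (P + s)) <= 2 * eta * Rabs P + 2 * eta * Rabs Q).
{ replace (-2 * Q * (P + s)) with ((-2 * Q) * P + (-2*Q) * s) by ring.
  eapply Rle_trans. apply Rabs_triang.
  rewrite !Rabs_mult. absn.
  pose proof (Rabs_pos P). pose proof (Rabs_pos Q). pose proof (Rabs_pos s). nra. }
assert (B2 : Rabs (2 * w * (P * P + 2 * P * s)) <= 12 * eta * Rabs P).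
{ replace (2 * w * (P * P + 2 * P * s)) with ((2 * w) * (P + 2 * s) * P) by ring.
  rewrite !Rabs_mult. absn.
  assert (Rabs (P + 2 * s) <= 3 * eta).
  { eapply Rle_trans. apply Rabs_triang. rewrite Rabs_mult, (Rabs_pos_eq 2) by lra. lra. }
  pose proof (Rabs_pos P). pose proof (Rabs_pos w). pose proof (Rabs_pos (P + 2*s)).
  assert (Rabs w * Rabs (P + 2 * s) <= 6 * eta). 
  { apply Rle_trans with ((2*eta)*(3*eta)). apply Rmult_le_compat; lra. nra. }
  nra. }
assert (B3 : Rabs (- (3/2) * theta * (w * Rabs w) * P) <= 6 * theta * eta * Rabs P).
{ rewrite !Rabs_mult. absn.
  rewrite (Rabs_pos_eq theta) by lra. rewrite Rabs_Rabsolu.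
  pose proof (Rabs_pos P). pose proof (Rabs_pos w).
  assert (Rabs w * Rabs w <= 4 * eta) by nra.
  assert (Rabs w * Rabs w * Rabs P <= 4 * eta * Rabs P) by (apply Rmult_le_compat_r; lra).
  assert (theta * (Rabs w * Rabs w * Rabs P) <= theta * (4 * eta * Rabs P)) by (apply Rmult_le_compat_l; lra).
  nra. }
assert (B4 : Rabs (theta * Rabs w * Q) <= 2 * theta * eta * Rabs Q).
{ rewrite !Rabs_mult. rewrite (Rabs_pos_eq theta) by lra. rewrite Rabs_Rabsolu.
  pose proof (Rabs_pos Q). pose proof (Rabs_pos w).
  assert (Rabs w * Rabs Q <= 2 * eta * Rabs Q) by (apply Rmult_le_compat_r; lra).
  assert (theta * (Rabs w * Rabs Q) <= theta * (2 * eta * Rabs Q)) by (apply Rmult_le_compat_l; lra).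
  nra. }
assert (B5 : Rabs (- 2 * s * s * (u * (1 + ub * (w + ub) / A0))) <= 12/5 * eta * Rabs u).
{ assert (Rabs (ub * (w + ub) / A0) <= 1/5).
  { unfold Rdiv. rewrite !Rabs_mult. rewrite Rabs_inv. rewrite (Rabs_pos_eq A0) by lra.
    rewrite (Rabs_pos_eq ub) by lra.
    assert (Rabs (w + ub) <= 3 * a / 4).
    { eapply Rle_trans. apply Rabs_triang. rewrite (Rabs_pos_eq ub) by lra. lra. }
    pose proof (Rabs_pos (w+ub)).
    apply Rle_trans with (ub * (3*a/4) * / A0).
    apply Rmult_le_compat_r. left; apply Rinv_0_lt_compat; lra. nra.
    apply Rmult_le_reg_r with A0. lra. rewrite Rmult_assoc, Rinv_l by lra. nra. }
  assert (Rabs (1 + ub * (w + ub) / A0) <= 6/5).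
  { eapply Rle_trans. apply Rabs_triang. rewrite Rabs_R1. lra. }
  rewrite !Rabs_mult. absn.
  pose proof (Rabs_pos u). pose proof (Rabs_pos s). pose proof (Rabs_pos (1 + ub * (w + ub) / A0)).
  assert (Rabs s * Rabs s <= eta) by nra.
  assert (Rabs u * Rabs (1 + ub * (w + ub) / A0) <= 6/5 * Rabs u) by nra.
  nra. }
assert (B6 : Rabs (- (3/2) * theta * s * ((w * Rabs w - ub * Rabs ub) + ub * Rabs ub * (u * (w + ub) / A0))) <= 24/5 * theta * eta * Rabs u).
{ assert (Rabs (w * Rabs w - ub * Rabs ub) <= Rabs u * (3 * eta)).
  { eapply Rle_trans. apply xabsx. replace (w - ub) with u by (unfold w; ring).
    rewrite (Rabs_pos_eq ub) by lra. pose proof (Rabs_pos u). nra. }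
  assert (Rabs (ub * Rabs ub * (u * (w + ub) / A0)) <= Rabs u * (3 * eta) / 15).
  { rewrite (Rabs_pos_eq ub) by lra. unfold Rdiv. rewrite !Rabs_mult, Rabs_inv.
    rewrite (Rabs_pos_eq A0) by lra. rewrite (Rabs_pos_eq ub) by lra.
    assert (Rabs (w + ub) <= 3 * eta).
    { eapply Rle_trans. apply Rabs_triang. rewrite (Rabs_pos_eq ub) by lra. lra. }
    assert (ub * ub * / A0 <= 1/15).
    { apply Rmult_le_reg_r with A0. lra. rewrite Rmult_assoc, Rinv_l by lra. nra. }
    pose proof (Rabs_pos u). pose proof (Rabs_pos (w+ub)).
    assert (0 <= ub * ub * / A0). { apply Rmult_le_pos. nra. left; apply Rinv_0_lt_compat; lra. }
    apply Rle_trans with (ub * ub * / A0 * (Rabs u * Rabs (w + ub))). right; ring.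
    apply Rle_trans with (1/15 * (Rabs u * (3 * eta))).
    apply Rmult_le_compat; nra. lra. }
  assert (Rabs ((w * Rabs w - ub * Rabs ub) + ub * Rabs ub * (u * (w + ub) / A0)) <= Rabs u * (16/5 * eta)).
  { eapply Rle_trans. apply Rabs_triang. lra. }
  rewrite !Rabs_mult. absn. rewrite (Rabs_pos_eq theta) by lra.
  pose proof (Rabs_pos u). pose proof (Rabs_pos s).
  pose proof (Rabs_pos ((w * Rabs w - ub * Rabs ub) + ub * Rabs ub * (u * (w + ub) / A0))).
  set (Z := Rabs ((w * Rabs w - ub * Rabs ub) + ub * Rabs ub * (u * (w + ub) / A0))) in *.
  assert (Rabs s * Z <= eta * (Rabs u * (16/5 * eta))) by (apply Rmult_le_compat; lra).
  assert (eta * (Rabs u * (16/5 * eta)) <= 16/5 * eta * Rabs u) by nra.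
  nra. }
eapply Rle_trans. apply Rabs_triang.
apply Rle_trans with ((2 * eta * Rabs P + 2 * eta * Rabs Q + 12 * eta * Rabs P + 6 * theta * eta * Rabs P + 2 * theta * eta * Rabs Q) + (12/5 * eta * Rabs u + 24/5 * theta * eta * Rabs u)).
2: { right; ring. }
apply Rplus_le_compat.
- unfold Rminus. eapply Rle_trans. apply Rabs_triang. rewrite Rabs_Ropp.
  apply Rplus_le_compat; [|exact B4].
  eapply Rle_trans. apply Rabs_triang.
  replace (- (3 / 2 * theta * (w * Rabs w) * P)) with (- (3/2) * theta * (w * Rabs w) * P) by ring.
  apply Rplus_le_compat; [|exact B3].
  eapply Rle_trans. apply Rabs_triang. rewrite Rabs_Ropp.
  lra.
- eapply Rle_trans. apply Rabs_triang.
  replace (- (3 / 2 * theta * s * (w * Rabs w - ub * Rabs ub + ub * Rabs ub * (u * (w + ub) / A0)))) with (- (3/2) * theta * s * ((w * Rabs w - ub * Rabs ub) + ub * Rabs ub * (u * (w + ub) / A0))) by ring.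
  lra.
Qed.
Lemma sq_abs x : x ^ 2 = Rabs x * Rabs x.
Proof. rewrite <- Rabs_mult. rewrite Rabs_pos_eq by nra. ring. Qed.

Lemma Yl k p q v al be ga : 1 <= k -> 0 <= p -> 0 <= q -> 0 <= v -> 0 <= al -> 0 <= be -> 0 <= ga ->
  2 * (k * q + p) * (al * p + be * q + ga * v) <= 2 * (k+1) * (al + be + ga) * (p*p + q*q + v*v).
Proof.
intros hk hp hq hv ha hb hg.
assert (a1 : 2*q*p <= p*p+q*q) by (pose proof (pow2_ge_0 (p-q)); nra).
assert (a2 : 2*q*v <= q*q+v*v) by (pose proof (pow2_ge_0 (q-v)); nra).
assert (a3 : 2*p*v <= p*p+v*v) by (pose proof (pow2_ge_0 (p-v)); nra).
assert (b1 : k*al*(2*q*p) <= k*al*(p*p+q*q)) by (apply Rmult_le_compat_l; nra).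
assert (b2 : k*ga*(2*q*v) <= k*ga*(q*q+v*v)) by (apply Rmult_le_compat_l; nra).
assert (b3 : be*(2*q*p) <= be*(p*p+q*q)) by (apply Rmult_le_compat_l; nra).
assert (b4 : ga*(2*p*v) <= ga*(p*p+v*v)) by (apply Rmult_le_compat_l; nra).
set (S := al+be+ga).
assert (c1 : (k*al + 2*al + be + ga) * (p*p) <= 2*(k+1)*S*(p*p)) by (apply Rmult_le_compat_r; unfold S; nra).
assert (c2 : (k*al + 2*k*be + k*ga + be) * (q*q) <= 2*(k+1)*S*(q*q)) by (apply Rmult_le_compat_r; unfold S; nra).
assert (c3 : (k*ga + ga) * (v*v) <= 2*(k+1)*S*(v*v)) by (apply Rmult_le_compat_r; unfold S; nra).
apply Rle_trans with ((k*al + 2*al + be + ga) * (p*p) + (k*al + 2*k*be + k*ga + be) * (q*q) + (k*ga + ga) * (v*v)).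
- lra.
- lra.
Qed.

Lemma err_bound k theta eta s u P Q w Fv eps :
  1 <= k -> 0 <= theta -> 0 < eta <= 1 -> Rabs w <= 2 * eta ->
  Rabs s <= eta -> Rabs P <= eta -> Rabs Q <= eta -> 0 < eps <= 1 ->
  Rabs Fv <= eta * ((14 + 6 * theta) * Rabs P + (2 + 2 * theta) * Rabs Q
            + (12/5 + 24/5 * theta) * Rabs u) ->
  -2*k*w*Q*P^2 + 4*k*w*(s+P)*P*Q + 2*k*(s+P)*Q^2 + 2*k*Q*Fv - 2*eps*Q*P^2
   - 2*eps*P*Fv - 2*eps*w*(s+P)*P^2
  <= (12 * k + 10 + 4 * (k + 1) * (18 + 13 * theta)) * eta * (P^2 + Q^2 + u^2).
Proof.
intros hk ht he hw hs hP hQ heps hF.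
pose proof (Rabs_pos P) as aP. pose proof (Rabs_pos Q) as aQ. pose proof (Rabs_pos u) as au.
pose proof (Rabs_pos w) as aw. pose proof (Rabs_pos s) as as_.

assert (hsp : Rabs (s + P) <= 2 * eta) by (apply Rle_trans with (Rabs s + Rabs P); [apply Rabs_triang|lra]).
pose proof (Rabs_pos (s+P)) as asp.


assert (ePQ : P^2 = (Rabs P) * (Rabs P)) by apply sq_abs.
assert (eQQ : Q^2 = (Rabs Q) * (Rabs Q)) by apply sq_abs.
assert (euu : u^2 = (Rabs u) * (Rabs u)) by apply sq_abs.
assert (T1 : -2*k*w*Q*P^2 <= 4 * k * eta * P^2).
{ assert (Rabs (-2*k*w*Q*P^2) <= 4 * k * eta * P^2).
  { rewrite !Rabs_mult. rewrite (Rabs_left (-2)) by lra. rewrite (Rabs_pos_eq k) by lra.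
    rewrite (Rabs_pos_eq (P^2)) by nra.
    assert ((Rabs w) * (Rabs Q) <= 2 * eta * eta) by (apply Rmult_le_compat; lra).
    assert ((Rabs w) * (Rabs Q) <= 2 * eta) by nra.
    assert (0 <= P^2) by nra.
    assert ((Rabs w) * (Rabs Q) * P^2 <= 2 * eta * P^2) by (apply Rmult_le_compat_r; lra).
    nra. }
  apply Rle_trans with (Rabs (-2*k*w*Q*P^2)). apply Rle_abs. exact H. }
assert (T2 : 4*k*w*(s+P)*P*Q <= 8 * k * eta * (P^2 + Q^2)).
{ assert (Rabs (4*k*w*(s+P)*P*Q) <= 16 * k * eta * ((Rabs P) * (Rabs Q))).
  { rewrite !Rabs_mult. rewrite (Rabs_pos_eq 4) by lra. rewrite (Rabs_pos_eq k) by lra.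
   
    assert ((Rabs w) * (Rabs (s+P)) <= 2 * (2 * eta)) by (apply Rmult_le_compat; lra).
    assert (0 <= (Rabs P) * (Rabs Q)) by nra.
    assert ((Rabs w) * (Rabs (s+P)) * ((Rabs P) * (Rabs Q)) <= 4 * eta * ((Rabs P) * (Rabs Q))) by (apply Rmult_le_compat_r; lra).
    nra. }
  assert (2 * ((Rabs P) * (Rabs Q)) <= P^2 + Q^2) by (rewrite ePQ, eQQ; pose proof (pow2_ge_0 (Rabs P - Rabs Q)); nra).
  apply Rle_trans with (Rabs (4*k*w*(s+P)*P*Q)). apply Rle_abs.
  eapply Rle_trans. exact H.
  assert (0 <= k * eta) by nra. nra. }
assert (T3 : 2*k*(s+P)*Q^2 <= 4 * k * eta * Q^2).
{ assert (Rabs (2*k*(s+P)*Q^2) <= 4 * k * eta * Q^2).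
  { rewrite !Rabs_mult. rewrite (Rabs_pos_eq 2) by lra. rewrite (Rabs_pos_eq k) by lra.
    rewrite (Rabs_pos_eq (Q^2)) by nra.
    assert (0 <= Q^2) by nra.
    assert ((Rabs (s+P)) * Q^2 <= 2 * eta * Q^2) by (apply Rmult_le_compat_r; lra). nra. }
  apply Rle_trans with (Rabs (2*k*(s+P)*Q^2)). apply Rle_abs. exact H. }
assert (T4 : - 2*eps*Q*P^2 <= 2 * eta * P^2).
{ assert (0 <= P^2) by nra.
  assert (Rabs Q * P^2 <= eta * P^2) by (apply Rmult_le_compat_r; lra).
  assert (- Q <= Rabs Q) by (rewrite <- Rabs_Ropp; apply Rle_abs).
  assert (- Q * P^2 <= Rabs Q * P^2) by (apply Rmult_le_compat_r; lra).
  assert (0 <= Rabs Q * P^2) by (apply Rmult_le_pos; [apply Rabs_pos|lra]).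
  assert (eps * (- Q * P^2) <= eps * (Rabs Q * P^2)) by (apply Rmult_le_compat_l; lra).
  assert (eps * (Rabs Q * P^2) <= Rabs Q * P^2) by nra.
  nra. }
assert (T5 : - 2*eps*w*(s+P)*P^2 <= 8 * eta * P^2).
{ assert (Rabs (- 2*eps*w*(s+P)*P^2) <= 8 * eta * P^2).
  { rewrite !Rabs_mult. rewrite (Rabs_left (-2)) by lra. rewrite (Rabs_pos_eq eps) by lra.
    rewrite (Rabs_pos_eq (P^2)) by nra.
    assert ((Rabs w) * (Rabs (s+P)) <= 2 * (2 * eta)) by (apply Rmult_le_compat; lra).
    assert ((Rabs w) * (Rabs (s+P)) <= 4 * eta) by nra.
    assert (0 <= P^2) by nra. assert (0 <= (Rabs w) * (Rabs (s+P))) by nra.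
    assert (eps * ((Rabs w) * (Rabs (s+P))) <= 4 * eta) by nra.
    assert (eps * ((Rabs w) * (Rabs (s+P))) * P^2 <= 4 * eta * P^2) by (apply Rmult_le_compat_r; lra).
    nra. }
  apply Rle_trans with (Rabs (- 2*eps*w*(s+P)*P^2)). apply Rle_abs. exact H. }
assert (T7 : 2*k*Q*Fv - 2*eps*P*Fv <= 4 * (k + 1) * (18 + 13 * theta) * eta * (P^2 + Q^2 + u^2)).
{ set (al := 14 + 6 * theta). set (be := 2 + 2 * theta). set (ga := 12/5 + 24/5 * theta).
  assert (Rabs (2*k*Q*Fv - 2*eps*P*Fv) <= 2 * (k * (Rabs Q) + (Rabs P)) * Rabs Fv).
  { replace (2*k*Q*Fv - 2*eps*P*Fv) with (2 * (k * Q - eps * P) * Fv) by ring.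
    rewrite !Rabs_mult. rewrite (Rabs_pos_eq 2) by lra.
    apply Rmult_le_compat_r. apply Rabs_pos. apply Rmult_le_compat_l. lra.
    eapply Rle_trans. apply Rabs_triang. rewrite Rabs_Ropp, !Rabs_mult.
    rewrite (Rabs_pos_eq k) by lra. rewrite (Rabs_pos_eq eps) by lra. nra. }
  assert (X : 2 * (k * (Rabs Q) + (Rabs P)) * Rabs Fv <= 2 * (k * (Rabs Q) + (Rabs P)) * (eta * (al * (Rabs P) + be * (Rabs Q) + ga * (Rabs u)))).
  { apply Rmult_le_compat_l. nra. exact hF. }
  assert (Y : 2 * (k * (Rabs Q) + (Rabs P)) * (al * (Rabs P) + be * (Rabs Q) + ga * (Rabs u)) <= 2 * (k+1) * (al + be + ga) * (P^2 + Q^2 + u^2)).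
  { rewrite ePQ, eQQ, euu. apply Yl; auto; unfold al, be, ga; lra. }
  assert (Z : 2 * (k+1) * (al + be + ga) <= 4 * (k + 1) * (18 + 13 * theta)) by (unfold al, be, ga; nra).
  assert (0 <= P^2 + Q^2 + u^2) by nra.
  apply Rle_trans with (Rabs (2*k*Q*Fv - 2*eps*P*Fv)). apply Rle_abs.
  eapply Rle_trans. exact H. eapply Rle_trans. exact X.
  replace (2 * (k * (Rabs Q) + (Rabs P)) * (eta * (al * (Rabs P) + be * (Rabs Q) + ga * (Rabs u)))) with (eta * (2 * (k * (Rabs Q) + (Rabs P)) * (al * (Rabs P) + be * (Rabs Q) + ga * (Rabs u)))) by ring.
  apply Rle_trans with (eta * (2 * (k+1) * (al + be + ga) * (P^2 + Q^2 + u^2))).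
  apply Rmult_le_compat_l; lra.
  assert (2 * (k+1) * (al + be + ga) * (P^2 + Q^2 + u^2) <= 4 * (k + 1) * (18 + 13 * theta) * (P^2 + Q^2 + u^2)) by (apply Rmult_le_compat_r; lra).
  nra. }
assert (0 <= P^2) by nra. assert (0 <= Q^2) by nra. assert (0 <= u^2) by nra.
assert (0 <= eta * Q^2) by (apply Rmult_le_pos; lra). assert (0 <= eta * u^2) by (apply Rmult_le_pos; lra).
assert (0 <= k * eta * u^2) by (apply Rmult_le_pos; [apply Rmult_le_pos|]; lra).
lra.
Qed.
Lemma main_bound a L k e eps M1 w P Q u :
  0 < a -> 0 < L -> 1 <= k -> 0 < e -> / e <= eps <= 1 -> 0 < M1 ->
  M1 <= 3/4 * k * a^2 - a - 1 -> M1 <= k - 1 -> Rabs w <= a / 2 ->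
  let mu := 1 / (4 * e * L * k) in
  let K1 := (1 + 2 * L^2) / M1 in
  let A := a^2 - w^2 in
  - (eps / L) * (A * P^2 + Q^2)
  + mu * (k * (A * P^2 + Q^2) - 2 * eps * (w * P^2 + Q * P))
  + mu / K1 * (P^2 + Q^2 + u^2)
  <= mu / K1 * (u^2 - 2 * L^2 * P^2).
Proof.
intros ha hL hk he heps hM hM1 hM2 hw mu K1 A.
assert (hmu : 0 < mu) by (unfold mu; apply Rdiv_lt_0_compat; [lra| apply Rmult_lt_0_compat; [apply Rmult_lt_0_compat;[lra|]|]; nra]).
assert (hc : mu / K1 = mu * M1 / (1 + 2 * L^2)) by (unfold K1; field; split; nra).
assert (hc2 : mu / K1 * (1 + 2 * L^2) = mu * M1) by (rewrite hc; field; nra).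
assert (hc3 : mu / K1 <= mu * M1).
{ rewrite hc. apply Rmult_le_reg_r with (1 + 2 * L^2). nra.
  unfold Rdiv. rewrite Rmult_assoc, Rinv_l by nra. assert (0 < mu * M1) by nra. nra. }
assert (hw2 : w^2 <= a^2/4).
{ rewrite (sq_abs w). pose proof (Rabs_pos w). nra. }
assert (hA : A >= 3/4 * a^2) by (unfold A; lra).
assert (heps1 : e * eps >= 1).
{ destruct heps as [h1 _]. apply Rmult_le_compat_l with (r := e) in h1; [|lra]. rewrite Rinv_r in h1; lra. }
assert (hP2 : 0 <= P^2) by nra. assert (hQ2 : 0 <= Q^2) by nra.
assert (G : - (4 * e * k * eps) * (A * P^2 + Q^2) + (k * (A * P^2 + Q^2) - 2 * eps * (w * P^2 + Q * P)) + M1 * (P^2 + Q^2) <= 0).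
{ assert (i1 : 4 * k * (A * P^2 + Q^2) <= (4 * e * k * eps) * (A * P^2 + Q^2)).
  { apply Rmult_le_compat_r. nra. nra. }
  assert (i2 : - 2 * eps * (Q * P) <= P^2 + Q^2).
  { assert (Rabs (2 * (Q * P)) <= P^2 + Q^2).
    { rewrite Rabs_mult, Rabs_mult, (Rabs_pos_eq 2) by lra.
      rewrite (sq_abs P), (sq_abs Q). pose proof (pow2_ge_0 (Rabs P - Rabs Q)). nra. }
    assert (- (2 * (Q * P)) <= P^2 + Q^2) by (eapply Rle_trans; [|exact H]; rewrite <- Rabs_Ropp; apply Rle_abs).
    assert (0 < / e) by (apply Rinv_0_lt_compat; lra).
    assert (eps * (-(2*(Q*P))) <= eps*(P^2+Q^2)) by (apply Rmult_le_compat_l; lra).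
    assert (eps*(P^2+Q^2) <= P^2+Q^2) by nra. lra. }
  assert (i3 : - 2 * eps * (w * P^2) <= a * P^2).
  { assert (- w <= a/2) by (eapply Rle_trans; [|exact hw]; rewrite <- Rabs_Ropp; apply Rle_abs).
    assert (- w * P^2 <= a/2 * P^2) by (apply Rmult_le_compat_r; lra).
    assert (w <= a/2) by (eapply Rle_trans; [|exact hw]; apply Rle_abs).
    assert (w * P^2 <= a/2 * P^2) by (apply Rmult_le_compat_r; lra).
    assert (0 < / e) by (apply Rinv_0_lt_compat; lra).
    assert (eps * (- w * P^2) <= eps * (a/2 * P^2)) by (apply Rmult_le_compat_l; lra).
    assert (eps * (a/2 * P^2) <= a/2 * P^2) by nra. lra. }
  assert (i4 : (-3 * k * A + a + 1 + M1) * P^2 <= 0).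
  { apply Rmult_le_0_r; [|lra]. nra. }
  nra. }
assert (G2 : - (eps / L) * (A * P^2 + Q^2)
  + mu * (k * (A * P^2 + Q^2) - 2 * eps * (w * P^2 + Q * P))
  + mu * M1 * (P^2 + Q^2) <= 0).
{ replace (- (eps / L) * (A * P^2 + Q^2) + mu * (k * (A * P^2 + Q^2) - 2 * eps * (w * P^2 + Q * P)) + mu * M1 * (P^2 + Q^2))
  with (mu * (- (4 * e * k * eps) * (A * P^2 + Q^2) + (k * (A * P^2 + Q^2) - 2 * eps * (w * P^2 + Q * P)) + M1 * (P^2 + Q^2))).
  2:{ unfold mu. field. repeat split; lra. }
  assert (mu * (- (4 * e * k * eps) * (A * P^2 + Q^2) + (k * (A * P^2 + Q^2) - 2 * eps * (w * P^2 + Q * P)) + M1 * (P^2 + Q^2)) <= mu * 0) by (apply Rmult_le_compat_l; lra).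
  lra. }
assert (G3 : mu / K1 * Q^2 <= mu * M1 * Q^2) by (apply Rmult_le_compat_r; lra).
assert (G4 : mu / K1 * (1 + 2 * L^2) * P^2 = mu * M1 * P^2) by (rewrite hc2; ring).
lra.
Qed.
Lemma cont2_2d f t x : cont2 f t x -> continuity_2d_pt f t x.
Proof. intros H. apply continuity_2d_pt_filterlim. exact H. Qed.

Lemma c2d_pow f n t x : continuity_2d_pt f t x -> continuity_2d_pt (fun u v => f u v ^ n) t x.
Proof.
intros H. induction n as [|n IH].
- simpl. apply continuity_2d_pt_const.
- simpl. apply continuity_2d_pt_mult; auto.
Qed.

Lemma c2d_1d f t x : continuity_2d_pt f t x -> continuous (fun y => f t y) x.
Proof.
intros H. apply continuity_2d_pt_filterlim in H.
apply (continuous_comp_2 (fun _ => t) (fun y => y) f).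
apply continuous_const. apply continuous_id. exact H.
Qed.

Lemma c2d_1d_t f t x : continuity_2d_pt f t x -> continuous (fun s => f s x) t.
Proof.
intros H. apply continuity_2d_pt_filterlim in H.
apply (continuous_comp_2 (fun s => s) (fun _ => x) f).
apply continuous_id. apply continuous_const. exact H.
Qed.

Lemma c2d_of_x (g : R -> R) t x : continuous g x -> continuity_2d_pt (fun _ v => g v) t x.
Proof.
intros H. apply (continuity_1d_2d_pt_comp g (fun _ v => v)).
apply continuity_pt_filterlim. exact H. apply continuity_2d_pt_id2.
Qed.

Lemma c2d_of_t (g : R -> R) t x : continuous g t -> continuity_2d_pt (fun v _ => g v) t x.
Proof.
intros H. apply (continuity_1d_2d_pt_comp g (fun v _ => v)).
apply continuity_pt_filterlim. exact H. apply continuity_2d_pt_id1.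
Qed.


Lemma C2_cont u : C2_2d u -> forall t x,
  continuity_2d_pt u t x /\ continuity_2d_pt (pt u) t x /\ continuity_2d_pt (px u) t x /\
  continuity_2d_pt (pt (pt u)) t x /\ continuity_2d_pt (px (pt u)) t x /\
  continuity_2d_pt (pt (px u)) t x /\ continuity_2d_pt (px (px u)) t x.
Proof.
intros H t x. destruct (H t x) as (_&_&_&_&_&_&c1&c2&c3&c4&c5&c6&c7).
repeat split; apply cont2_2d; assumption.
Qed.

Lemma schwarz_u u : C2_2d u -> forall t x, pt (px u) t x = px (pt u) t x.
Proof.
intros H t x. unfold pt, px.
apply (Schwarz u t x).
- exists (mkposreal 1 Rlt_0_1). intros s y _ _.
  destruct (H s y) as (h1&h2&h3&h4&h5&h6&_). unfold pt, px in *. tauto.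
- destruct (C2_cont u H t x) as (_&_&_&_&_&c&_). exact c.
- destruct (C2_cont u H t x) as (_&_&_&_&c&_). exact c.
Qed.
Definition e1f (a k L : R) (ubar : R -> R) (u : R -> R -> R) (t x : R) : R :=
    k * ((a ^ 2 - (ubar x + u t x) ^ 2) * (px u t x) ^ 2 + (pt u t x) ^ 2)
    - 2 * exp (- (x / L)) * ((ubar x + u t x) * (px u t x) ^ 2
                              + pt u t x * px u t x).

Definition Dtf (a k L : R) (ubar : R -> R) (u : R -> R -> R) (t x : R) : R :=
  k * (-2 * (ubar x + u t x) * pt u t x * (px u t x)^2
       + 2 * (a ^ 2 - (ubar x + u t x) ^ 2) * px u t x * pt (px u) t x
       + 2 * pt u t x * pt (pt u) t x)
  - 2 * exp (- (x / L)) * (pt u t x * (px u t x)^2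
       + 2 * (ubar x + u t x) * px u t x * pt (px u) t x
       + pt (pt u) t x * px u t x + pt u t x * pt (px u) t x).

Definition Hf (a k L : R) (ubar : R -> R) (u : R -> R -> R) (t x : R) : R :=
  2 * k * (a ^ 2 - (ubar x + u t x) ^ 2) * px u t x * pt u t x
  - 2 * k * (ubar x + u t x) * (pt u t x)^2
  - exp (- (x / L)) * (a ^ 2 - (ubar x + u t x) ^ 2) * (px u t x)^2
  - exp (- (x / L)) * (pt u t x)^2.

Definition Hxf (a k L : R) (ubar : R -> R) (u : R -> R -> R) (t x : R) : R :=
  let w := ubar x + u t x in
  let A := a ^ 2 - w ^ 2 in
  let P := px u t x in let Q := pt u t x in
  let s := Derive ubar x in
  let Px := px (px u) t x in let Qx := px (pt u) t x in
  let eps := exp (- (x / L)) in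
  2 * k * ((-2 * w * (s + P)) * P * Q + A * Px * Q + A * P * Qx)
  - 2 * k * ((s + P) * Q^2 + 2 * w * Q * Qx)
  - ((- eps / L) * A * P^2 + eps * (-2 * w * (s + P)) * P^2 + 2 * eps * A * P * Px)
  - ((- eps / L) * Q^2 + 2 * eps * Q * Qx).


Ltac c2d := repeat first
  [ assumption
  | apply continuity_2d_pt_plus | apply continuity_2d_pt_minus
  | apply continuity_2d_pt_mult | apply continuity_2d_pt_opp
  | apply c2d_pow | apply continuity_2d_pt_const
  | apply continuity_2d_pt_inv ].

Lemma cont_all a k L ubar u : C2_2d u -> C1_1d ubar -> 0 < L -> forall t x,
  continuity_2d_pt (Dtf a k L ubar u) t x /\ continuity_2d_pt (Hxf a k L ubar u) t x /\
  continuity_2d_pt (e1f a k L ubar u) t x.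
Proof.
intros H Hub hL t x.
destruct (C2_cont u H t x) as (c1&c2&c3&c4&c5&c6&c7).
assert (cb : continuity_2d_pt (fun _ v => ubar v) t x).
{ apply c2d_of_x. exact (@ex_derive_continuous R_AbsRing R_NormedModule ubar x (proj1 (Hub x))). }
assert (cs : continuity_2d_pt (fun _ v => Derive ubar v) t x).
{ apply c2d_of_x. apply Hub. }
assert (ce : continuity_2d_pt (fun _ v => exp (- (v / L))) t x).
{ apply (c2d_of_x (fun v => exp (- (v / L)))).
  assert (ex_derive (fun v => exp (- (v / L))) x) by (auto_derive; lra).
  exact (@ex_derive_continuous R_AbsRing R_NormedModule _ x H0). }
unfold Dtf, Hxf, e1f. repeat split; c2d.
Qed.
Lemma C2_facts u : C2_2d u -> forall t x,
  ex_derive (fun s => u s x) t /\ ex_derive (fun y => u t y) x /\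
  ex_derive (fun s => pt u s x) t /\ ex_derive (fun y => pt u t y) x /\
  ex_derive (fun s => px u s x) t /\ ex_derive (fun y => px u t y) x.
Proof. intros H t x. destruct (H t x) as (?&?&?&?&?&?&_). tauto. Qed.

Lemma e1f_derive a k L ubar u : C2_2d u -> forall t x,
  is_derive (fun s => e1f a k L ubar u s x) t (Dtf a k L ubar u t x).
Proof.
intros H t x. destruct (C2_facts u H t x) as (h1&h2&h3&h4&h5&h6).
unfold e1f, Dtf. auto_derive.
- tauto.
- unfold pt, px. ring.
Qed.

Lemma Hf_derive a k L ubar u : C2_2d u -> C1_1d ubar -> 0 < L -> forall t x,
  is_derive (fun y => Hf a k L ubar u t y) x (Hxf a k L ubar u t x).
Proof.
intros H Hub hL t x. destruct (C2_facts u H t x) as (h1&h2&h3&h4&h5&h6).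
destruct (Hub x) as [hu1 hu2].
unfold Hf, Hxf. auto_derive.
- tauto.
- unfold pt, px. change (fun x0 => ubar x0) with ubar. unfold Rdiv. field. lra.
Qed.

Lemma ex_RInt_c2d (f : R -> R -> R) t a b : (forall x, continuity_2d_pt f t x) -> ex_RInt (fun x => f t x) a b.
Proof. intros H. apply (ex_RInt_continuous (V := R_CompleteNormedModule)). intros z _. apply c2d_1d. apply H. Qed.

Lemma dE1 a k L ubar u : C2_2d u -> C1_1d ubar -> 0 < L -> forall t,
  is_derive (fun s => E1 a k L ubar u s) t (RInt (fun x => Dtf a k L ubar u t x) 0 L).
Proof.
intros H Hub hL t.
assert (HH : is_derive (fun s => RInt (fun x => e1f a k L ubar u s x) 0 L) t
   (RInt (fun x => Derive (fun s => e1f a k L ubar u s x) t) 0 L)).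
{ apply (is_derive_RInt_param (fun s x => e1f a k L ubar u s x)).
  - exists (mkposreal 1 Rlt_0_1). intros y _ z _. eexists. apply e1f_derive. exact H.
  - intros z _. apply continuity_2d_pt_ext with (f := Dtf a k L ubar u).
    + intros s y. symmetry. apply is_derive_unique. apply e1f_derive. exact H.
    + apply cont_all; auto.
  - exists (mkposreal 1 Rlt_0_1). intros y _. apply ex_RInt_c2d.
    intros z. apply cont_all; auto. }
unfold E1. 
replace (RInt (fun x => Dtf a k L ubar u t x) 0 L) with (RInt (fun x => Derive (fun s => e1f a k L ubar u s x) t) 0 L).
- exact HH.
- apply RInt_ext. intros z _. apply is_derive_unique. apply e1f_derive. exact H.
Qed.

Definition Rf (a k L w s P Q Fv eps : R) : R :=
  -2*k*w*Q*P^2 + 4*k*w*(s+P)*P*Q + 2*k*(s+P)*Q^2 + 2*k*Q*Fv - 2*eps*Q*P^2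
   - 2*eps*P*Fv - 2*eps*w*(s+P)*P^2 - (eps / L) * ((a^2 - w^2) * P^2 + Q^2).

Lemma pointwise_interior a theta L lambda k e mu eta0 eta C0 M1 K1 ub s u P Q Fv eps :
  0 < a -> 0 <= theta -> 0 < L -> 1/2 < lambda < 1 -> 1 <= k -> 0 < e -> / e <= eps <= 1 ->
  0 < M1 -> M1 <= 3/4 * k * a^2 - a - 1 -> M1 <= k - 1 ->
  mu = 1 / (4 * e * L * k) -> K1 = (1 + 2 * L^2) / M1 ->
  C0 = 12 * k + 4 * (k + 1) * (18 + 13 * theta + 1 / a ^ 2 * (8 + 6 * theta)) + 10 ->
  eta0 = mu / (C0 * K1) -> eta <= 1 -> eta <= eta0 ->
  0 < ub <= eta -> ub <= (1 - lambda) * (a / 2) -> Rabs u <= eta -> Rabs u <= (1 - lambda) * (a / 2) ->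
  Rabs s <= eta -> Rabs P <= eta -> Rabs Q <= eta ->
  Fv = Ftilde theta (u + ub) (P + s) Q - (a ^ 2 - (ub + u) ^ 2) / (a ^ 2 - ub ^ 2) * Ftilde theta ub s 0 ->
  Rf a k L (ub + u) s P Q Fv eps <=
  - mu * (k * ((a ^ 2 - (ub + u) ^ 2) * P ^ 2 + Q ^ 2) - 2 * eps * ((ub + u) * P ^ 2 + Q * P))
  + mu / K1 * (u ^ 2 - 2 * L ^ 2 * P ^ 2).
Proof.
intros ha ht hL hlam hk he heps hM hM1 hM2 hmu hK1 hC0 heta heta1 heta2 hub hub2 hu hu2 hs hP hQ hF.
assert (hmup : 0 < mu) by (rewrite hmu; apply Rdiv_lt_0_compat; [lra|]; apply Rmult_lt_0_compat; [|lra]; apply Rmult_lt_0_compat; lra).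
assert (hK1p : 0 < K1) by (rewrite hK1; apply Rdiv_lt_0_compat; nra).
assert (ha2 : 0 <= 1 / a ^ 2 * (8 + 6 * theta)) by (apply Rmult_le_pos; [apply Rlt_le, Rdiv_lt_0_compat; nra | lra]).
assert (hC0p : 0 < C0) by (rewrite hC0; nra).
assert (hetap : 0 < eta) by lra.
assert (hCe : C0 * eta0 = mu / K1) by (rewrite heta; field; lra).
assert (hub4 : ub <= a / 4) by nra.
assert (hu4 : Rabs u <= a / 4) by nra.
assert (FB := F_bound a theta eta ub s u P Q ha ht (conj hetap heta1) hub hub4 hu hu4 hs hP hQ).
rewrite <- hF in FB.
assert (hw : Rabs (ub + u) <= 2 * eta).
{ apply Rle_trans with (Rabs ub + Rabs u). apply Rabs_triang. rewrite Rabs_pos_eq by lra. lra. }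
assert (hwa : Rabs (ub + u) <= a / 2).
{ apply Rle_trans with (Rabs ub + Rabs u). apply Rabs_triang. rewrite Rabs_pos_eq by lra. lra. }
assert (hepsp : 0 < eps) by (apply Rlt_le_trans with (/ e); [apply Rinv_0_lt_compat; lra | lra]).
assert (EB := err_bound k theta eta s u P Q (ub + u) Fv eps hk ht (conj hetap heta1) hw hs hP hQ (conj hepsp (proj2 heps)) FB).
assert (EB2 : (12 * k + 10 + 4 * (k + 1) * (18 + 13 * theta)) * eta * (P^2 + Q^2 + u^2) <= mu / K1 * (P^2 + Q^2 + u^2)).
{ rewrite <- hCe. apply Rmult_le_compat_r. nra. apply Rle_trans with (C0 * eta).
  apply Rmult_le_compat_r. lra. rewrite hC0. nra. apply Rmult_le_compat_l; lra. }
assert (MB := main_bound a L k e eps M1 (ub + u) P Q u ha hL hk he heps hM hM1 hM2 hwa).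
cbv zeta in MB. rewrite <- hmu in MB. rewrite <- hK1 in MB.
unfold Rf. lra.
Qed.
Lemma iR_plus (f g : R -> R) (a b If Ig : R) : is_RInt f a b If -> is_RInt g a b Ig -> is_RInt (fun x => f x + g x) a b (If + Ig).
Proof. intros H1 H2. exact (@is_RInt_plus R_NormedModule f g a b If Ig H1 H2). Qed.
Lemma iR_scal (f : R -> R) (a b c If : R) : is_RInt f a b If -> is_RInt (fun x => c * f x) a b (c * If).
Proof. intros H1. exact (@is_RInt_scal R_NormedModule f a b c If H1). Qed.
Lemma iR_const (a b c : R) : is_RInt (fun _ => c) a b ((b - a) * c).
Proof. exact (@is_RInt_const R_NormedModule a b c). Qed.
Lemma iR_ext (f g : R -> R) (a b If : R) : (forall x, f x = g x) -> is_RInt f a b If -> is_RInt g a b If.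
Proof. intros He H. apply (is_RInt_ext (V := R_NormedModule) f). intros; apply He. exact H. Qed.
Lemma iR_ex (f : R -> R) (a b : R) : ex_RInt f a b -> is_RInt f a b (RInt f a b).
Proof. intros H. exact (@RInt_correct R_CompleteNormedModule f a b H). Qed.
Lemma ex_cont (f : R -> R) (a b : R) : (forall x, continuous f x) -> ex_RInt f a b.
Proof. intros H. apply (ex_RInt_continuous (V := R_CompleteNormedModule)). intros; apply H. Qed.

Lemma cs_ineq (g : R -> R) (x L : R) : x <= L -> (forall y, continuous g y) ->
  (RInt g x L) ^ 2 <= (L - x) * RInt (fun y => g y ^ 2) x L.
Proof.
intros hxL hg.
assert (cg2 : forall y, continuous (fun y => g y ^ 2) y).
{ intros y. apply (continuous_mult (K := R_AbsRing) g (fun y => g y ^ 1)). apply hg.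
  apply (continuous_mult (K := R_AbsRing) g (fun _ => 1)). apply hg. apply continuous_const. }
destruct (Req_dec x L) as [e|ne].
{ subst. rewrite !RInt_point. simpl. unfold zero; simpl. lra. }
set (l := L - x). set (m := RInt g x L). set (G := RInt (fun y => g y ^ 2) x L).
assert (I1 : is_RInt g x L m) by (apply iR_ex; apply ex_cont; exact hg).
assert (I2 : is_RInt (fun y => g y ^ 2) x L G) by (apply iR_ex; apply ex_cont; exact cg2).
assert (I3 : is_RInt (fun y => (l * g y - m) ^ 2) x L (l^2 * G + (-2 * l * m) * m + l * m^2)).
{ apply iR_ext with (f := fun y => (l^2 * g y ^ 2 + (-2 * l * m) * g y) + m ^ 2).
  intros; ring.
  replace (l * m ^ 2) with ((L - x) * m^2) by (unfold l; ring).
  apply iR_plus. apply iR_plus. apply iR_scal. exact I2. apply iR_scal. exact I1. apply iR_const. }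
assert (P0 : 0 <= l^2 * G + (-2 * l * m) * m + l * m^2).
{ apply (is_RInt_le (fun _ => 0) (fun y => (l * g y - m) ^ 2) x L 0 _ hxL).
  - assert (H0 := iR_const x L 0). replace ((L - x) * 0) with 0 in H0 by ring. exact H0.
  - exact I3.
  - intros; apply pow2_ge_0. }
assert (hl : 0 < l) by (unfold l; lra).
assert (l * (m^2) <= l * (l * G)) by nra.
apply Rmult_le_reg_l in H; [|exact hl]. fold l m G. nra.
Qed.

Lemma poincare (f df : R -> R) L : 0 < L -> (forall x, is_derive f x (df x)) ->
  (forall x, continuous df x) ->
  RInt (fun x => f x ^ 2) 0 L <= 2 * L * f L ^ 2 + 2 * L ^ 2 * RInt (fun x => df x ^ 2) 0 L.
Proof.
intros hL hd hc.
assert (cf : forall x, continuous f x).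
{ intros x. apply (@ex_derive_continuous R_AbsRing R_NormedModule). eexists; apply hd. }
assert (sq : forall h : R -> R, (forall y, continuous h y) -> forall y, continuous (fun y => h y ^ 2) y).
{ intros h hh y. apply (continuous_mult (K := R_AbsRing) h (fun y => h y ^ 1)). apply hh.
  apply (continuous_mult (K := R_AbsRing) h (fun _ => 1)). apply hh. apply continuous_const. }
set (J := RInt (fun x => df x ^ 2) 0 L).
assert (pw : forall x, 0 <= x <= L -> f x ^ 2 <= 2 * f L ^ 2 + 2 * L * J).
{ intros x hx.
  assert (e1 : RInt df x L = f L - f x).
  { apply is_RInt_unique. apply (is_RInt_derive (V := R_CompleteNormedModule) f df).
    intros; apply hd. intros; apply hc. }
  assert (cs := cs_ineq df x L (proj2 hx) hc). rewrite e1 in cs.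
  assert (ch : RInt (fun y => df y ^ 2) 0 x + RInt (fun y => df y ^ 2) x L = J).
  { unfold J. rewrite <- (RInt_Chasles (V := R_CompleteNormedModule) _ 0 x L). reflexivity.
    apply ex_cont; apply sq; exact hc. apply ex_cont; apply sq; exact hc. }
  assert (g0 : 0 <= RInt (fun y => df y ^ 2) 0 x).
  { apply RInt_ge_0. lra. apply ex_cont; apply sq; exact hc. intros; apply pow2_ge_0. }
  assert (g1 : 0 <= RInt (fun y => df y ^ 2) x L).
  { apply RInt_ge_0. lra. apply ex_cont; apply sq; exact hc. intros; apply pow2_ge_0. }
  assert ((L - x) * RInt (fun y => df y ^ 2) x L <= L * J).
  { apply Rmult_le_compat; lra. }
  assert (f x ^ 2 <= 2 * f L ^ 2 + 2 * (f L - f x) ^ 2) by (pose proof (pow2_ge_0 (2 * f L - f x)); nra).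
  lra. }
apply Rle_trans with (RInt (fun _ => 2 * f L ^ 2 + 2 * L * J) 0 L).
- apply RInt_le. lra. apply ex_cont; apply sq; exact cf. apply ex_cont; intros; apply continuous_const.
  intros x hx; apply pw; lra.
- rewrite (is_RInt_unique _ _ _ _ (iR_const 0 L (2 * f L ^ 2 + 2 * L * J))). fold J. nra.
Qed.

Lemma DH_eq a k L ubar u t x Fv : 0 < L ->
  pt (px u) t x = px (pt u) t x ->
  pt (pt u) t x + 2 * (ubar x + u t x) * px (pt u) t x
     - (a ^ 2 - (ubar x + u t x) ^ 2) * px (px u) t x = Fv ->
  Dtf a k L ubar u t x - Hxf a k L ubar u t x =
  Rf a k L (ubar x + u t x) (Derive ubar x) (px u t x) (pt u t x) Fv (exp (- (x / L))).
Proof.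
intros hL hS hP. unfold Dtf, Hxf, Rf. cbv zeta. rewrite hS.
replace (pt (pt u) t x) with (Fv - 2 * (ubar x + u t x) * px (pt u) t x
     + (a ^ 2 - (ubar x + u t x) ^ 2) * px (px u) t x) by lra.
field. lra.
Qed.

Lemma bnd0_alg a k lam w Q : 0 < a -> 0 < k -> 0 < lam < 1 -> k * (lam * a) >= 1 ->
  Rabs w <= (1 - lam) * a ->
  0 <= 2 * k * (a^2 - w^2) * (k * Q) * Q - 2 * k * w * Q^2 - 1 * (a^2 - w^2) * (k * Q)^2 - 1 * Q^2.
Proof.
intros ha hk hl hka hw.
assert (h1 : k * w + 1 <= k * a).
{ assert (w <= Rabs w) by apply Rle_abs. nra. }
assert (h2 : - (k * w + 1) <= k * a).
{ assert (- w <= Rabs w) by (rewrite <- Rabs_Ropp; apply Rle_abs). nra. }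
assert (h3 : 0 <= (k*a)^2 - (k*w+1)^2) by nra.
replace (2 * k * (a^2 - w^2) * (k * Q) * Q - 2 * k * w * Q^2 - 1 * (a^2 - w^2) * (k * Q)^2 - 1 * Q^2)
  with (((k*a)^2 - (k*w+1)^2) * Q^2) by ring.
apply Rmult_le_pos; [lra | apply pow2_ge_0].
Qed.

Lemma bndL_alg a k e w P q : 0 < a -> 0 < k -> 0 < e -> Rabs w <= 1 / (4 * k * e) + 1 / (4 * k * e) ->
  w^2 <= a^2 ->
  2 * k * (a^2 - w^2) * P * q - 2 * k * w * q^2 - / e * (a^2 - w^2) * P^2 - / e * q^2
  <= 4 / 3 * e * a ^ 2 * k ^ 2 * q ^ 2.
Proof.
intros ha hk he hw hwa.
set (A := a^2 - w^2).
assert (hA : 0 <= A) by (unfold A; lra).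
assert (i1 : 2 * k * A * P * q - / e * A * P^2 <= e * k^2 * A * q^2).
{ assert (0 <= A * (P - e * k * q)^2 * / e).
  { apply Rmult_le_pos. apply Rmult_le_pos. lra. apply pow2_ge_0. left; apply Rinv_0_lt_compat; lra. }
  replace (A * (P - e * k * q)^2 * / e) with (A * P^2 * / e - 2 * k * A * P * q * (e * / e) + e * k^2 * A * q^2 * (e * / e)) in H by ring.
  rewrite Rinv_r in H by lra. lra. }
assert (i2 : - 2 * k * w * q^2 <= / e * q^2).
{ assert (2 * k * Rabs w <= / e).
  { replace (1 / (4 * k * e) + 1 / (4 * k * e)) with (/ e / (2 * k)) in hw by (field; lra).
    apply Rmult_le_compat_l with (r := 2 * k) in hw; [|lra].
    replace (2 * k * (/ e / (2 * k))) with (/ e) in hw by (field; lra). exact hw. }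
  assert (- w <= Rabs w) by (rewrite <- Rabs_Ropp; apply Rle_abs).
  assert (- 2 * k * w <= / e) by nra.
  assert (0 <= q^2) by apply pow2_ge_0.
  nra. }
assert (i3 : e * k^2 * A * q^2 <= e * k^2 * a^2 * q^2).
{ apply Rmult_le_compat_r. apply pow2_ge_0. apply Rmult_le_compat_l. nra. unfold A. nra. }
assert (i4 : 0 <= e * a ^ 2 * k ^ 2 * q ^ 2).
{ pose proof (pow2_ge_0 q). pose proof (pow2_ge_0 a). pose proof (pow2_ge_0 k). apply Rmult_le_pos; [apply Rmult_le_pos; [apply Rmult_le_pos|]|]; lra. }
fold A. lra.
Qed.

Lemma exp_le x y : x <= y -> exp x <= exp y.
Proof. intros [h|h]. left; apply exp_increasing; exact h. subst; lra. Qed.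

Lemma loc_int a0 b0 t : a0 < t < b0 -> locally t (fun s => a0 < s < b0).
Proof.
intros H. assert (hp : 0 < Rmin (t - a0) (b0 - t)) by (apply Rmin_pos; lra).
exists (mkposreal _ hp). intros y Hy.
change (Rabs (y - t) < Rmin (t - a0) (b0 - t)) in Hy.
pose proof (Rmin_l (t - a0) (b0 - t)). pose proof (Rmin_r (t - a0) (b0 - t)).
unfold Rabs in Hy. destruct (Rcase_abs (y - t)); simpl in *; lra.
Qed.

Lemma E1_ineq (a theta L lambda k : R) (ubar : R -> R) (u : R -> R -> R) (b : R -> R) (T mu eta0 eta C0 M1 K1 : R) :
  C2_2d u -> C1_1d ubar -> 0 < L -> 0 < a -> 0 <= theta -> 1/2 < lambda < 1 -> 1 <= k ->
  k * (lambda * a) >= 1 ->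
  0 < M1 -> M1 <= 3/4 * k * a^2 - a - 1 -> M1 <= k - 1 ->
  mu = 1 / (4 * exp 1 * L * k) -> K1 = (1 + 2 * L^2) / M1 ->
  C0 = 12 * k + 4 * (k + 1) * (18 + 13 * theta + 1 / a ^ 2 * (8 + 6 * theta)) + 10 ->
  eta0 = mu / (C0 * K1) -> eta <= 1 -> eta <= eta0 ->
  (forall x, 0 <= x <= L -> 0 < ubar x <= eta /\ ubar x <= (1 - lambda) * (a / 2) /\
      ubar x <= 1 / (4 * k * exp 1) /\ Rabs (Derive ubar x) <= eta) ->
  (forall t x, 0 <= t <= T -> 0 <= x <= L ->
      Rabs (u t x) <= eta /\ Rabs (u t x) <= (1 - lambda) * (a / 2) /\
      Rabs (u t x) <= 1 / (4 * k * exp 1) /\ Rabs (px u t x) <= eta /\ Rabs (pt u t x) <= eta) ->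
  (forall t x, 0 <= t <= T -> 0 <= x <= L ->
     pt (pt u) t x + 2 * (ubar x + u t x) * px (pt u) t x
     - (a ^ 2 - (ubar x + u t x) ^ 2) * px (px u) t x
     = Ftilde theta (u t x + ubar x) (px u t x + Derive ubar x) (pt u t x)
       - (a ^ 2 - (ubar x + u t x) ^ 2) / (a ^ 2 - (ubar x) ^ 2)
         * Ftilde theta (ubar x) (Derive ubar x) 0) ->
  (forall t, 0 <= t <= T -> px u t 0 = k * pt u t 0 /\ u t L = b t) ->
  forall t, 0 < t < T ->
  RInt (fun x => Dtf a k L ubar u t x) 0 L <=
    - mu * E1 a k L ubar u t + 4 / 3 * exp 1 * a ^ 2 * k ^ 2 * (Derive b t) ^ 2
    + 1 / (2 * exp 1 * K1 * k) * (b t) ^ 2.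
Proof.
intros hC2 hub hL ha ht hlam hk hka hM hM1 hM2 hmu hK1 hC0 heta heta1 heta2 Hub Hu Hpde Hbc t htT.
assert (he : 0 < exp 1) by apply exp_pos.
assert (hmup : 0 < mu) by (rewrite hmu; apply Rdiv_lt_0_compat; [lra|]; apply Rmult_lt_0_compat; [|lra]; apply Rmult_lt_0_compat; lra).
assert (hK1p : 0 < K1) by (rewrite hK1; apply Rdiv_lt_0_compat; nra).
assert (ht0 : 0 <= t <= T) by lra.
set (c := mu / K1).
assert (CA := cont_all a k L ubar u hC2 hub hL).
assert (CU := C2_cont u hC2).
assert (cu2 : forall x, continuity_2d_pt (fun t x => u t x ^ 2) t x).
{ intros x. apply c2d_pow. apply CU. }
assert (cp2 : forall x, continuity_2d_pt (fun t x => px u t x ^ 2) t x).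
{ intros x. apply c2d_pow. apply CU. }
assert (IH : is_RInt (fun x => Hxf a k L ubar u t x) 0 L (Hf a k L ubar u t L - Hf a k L ubar u t 0)).
{ apply (is_RInt_derive (V := R_CompleteNormedModule) (fun x => Hf a k L ubar u t x)).
  intros x _. apply Hf_derive; auto.
  intros x _. apply (c2d_1d (Hxf a k L ubar u)). apply CA. }
assert (IE : is_RInt (fun x => e1f a k L ubar u t x) 0 L (E1 a k L ubar u t)).
{ apply iR_ex. apply ex_RInt_c2d. intros x; apply CA. }
set (Iu := RInt (fun x => u t x ^ 2) 0 L).
set (IP := RInt (fun x => px u t x ^ 2) 0 L).
assert (IU : is_RInt (fun x => u t x ^ 2) 0 L Iu).
{ apply iR_ex. apply (ex_RInt_c2d (fun t x => u t x ^ 2)). exact cu2. }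
assert (IPP : is_RInt (fun x => px u t x ^ 2) 0 L IP).
{ apply iR_ex. apply (ex_RInt_c2d (fun t x => px u t x ^ 2)). exact cp2. }
assert (ID : is_RInt (fun x => Dtf a k L ubar u t x) 0 L (RInt (fun x => Dtf a k L ubar u t x) 0 L)).
{ apply iR_ex. apply ex_RInt_c2d. intros x; apply CA. }
assert (IG : is_RInt (fun x => Hxf a k L ubar u t x + (- mu * e1f a k L ubar u t x + c * ((u t x) ^ 2 - 2 * L ^ 2 * (px u t x) ^ 2))) 0 L
   ((Hf a k L ubar u t L - Hf a k L ubar u t 0) + (- mu * E1 a k L ubar u t + (c * Iu + (- (c * 2 * L^2)) * IP)))).
{ apply iR_ext with (f := fun x => Hxf a k L ubar u t x + (- mu * e1f a k L ubar u t x + (c * (u t x) ^ 2 + (- (c * 2 * L^2)) * (px u t x) ^ 2))).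
  intros; ring.
  apply iR_plus. exact IH. apply iR_plus. apply iR_scal. exact IE. apply iR_plus; apply iR_scal; assumption. }
assert (LE : RInt (fun x => Dtf a k L ubar u t x) 0 L <=
   (Hf a k L ubar u t L - Hf a k L ubar u t 0) + (- mu * E1 a k L ubar u t + (c * Iu + (- (c * 2 * L^2)) * IP))).
{ apply (is_RInt_le _ _ 0 L _ _ (Rlt_le _ _ hL) ID IG).
  intros x hx.
  assert (hx' : 0 <= x <= L) by lra.
  destruct (Hub x hx') as (hb1 & hb2 & hb3 & hb4).
  destruct (Hu t x ht0 hx') as (hu1 & hu2 & hu3 & hu4 & hu5).
  assert (DH := DH_eq a k L ubar u t x _ hL (schwarz_u u hC2 t x) (Hpde t x ht0 hx')).
  assert (heps : / exp 1 <= exp (- (x / L)) <= 1).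
  { split. rewrite <- exp_Ropp. apply exp_le.
    apply Ropp_le_contravar. apply Rmult_le_reg_r with L. lra. unfold Rdiv. rewrite Rmult_assoc, Rinv_l by lra. lra.
    rewrite <- exp_0. apply exp_le. assert (0 <= x / L) by (apply Rdiv_le_0_compat; lra). lra. }
  assert (PI := pointwise_interior a theta L lambda k (exp 1) mu eta0 eta C0 M1 K1 (ubar x) (Derive ubar x) (u t x)
     (px u t x) (pt u t x) _ (exp (- (x / L))) ha ht hL hlam hk he heps hM hM1 hM2 hmu hK1 hC0 heta heta1 heta2
     hb1 hb2 hu1 hu2 hb4 hu4 hu5 eq_refl).
  fold c in PI. unfold e1f. lra. }
assert (PO : Iu <= 2 * L * (u t L) ^ 2 + 2 * L ^ 2 * IP).
{ apply (poincare (fun y => u t y) (fun y => px u t y) L hL).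
  intros x. apply Derive_correct. apply (C2_facts u hC2 t x).
  intros x. apply (c2d_1d (px u)). apply CU. }
destruct (Hbc t ht0) as [hbc0 hbcL].
rewrite hbcL in PO.
assert (hQL : pt u t L = Derive b t).
{ unfold pt. apply Derive_ext_loc. apply filter_imp with (fun s => 0 < s < T).
  intros s hs. apply Hbc. lra. apply loc_int. exact htT. }
assert (BL : Hf a k L ubar u t L <= 4 / 3 * exp 1 * a ^ 2 * k ^ 2 * (Derive b t) ^ 2).
{ assert (hLL : 0 <= L <= L) by lra.
  destruct (Hub L hLL) as (hb1 & hb2 & hb3 & hb4).
  destruct (Hu t L ht0 hLL) as (hu1 & hu2 & hu3 & hu4 & hu5).
  unfold Hf. replace (exp (- (L / L))) with (/ exp 1) by (rewrite <- exp_Ropp; f_equal; field; lra).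
  rewrite <- hQL. apply bndL_alg; auto. lra.
  apply Rle_trans with (Rabs (ubar L) + Rabs (u t L)). apply Rabs_triang. rewrite Rabs_pos_eq by lra. lra.
  assert (Rabs (ubar L + u t L) <= a / 2).
  { apply Rle_trans with (Rabs (ubar L) + Rabs (u t L)). apply Rabs_triang. rewrite Rabs_pos_eq by lra. nra. }
  rewrite (sq_abs (ubar L + u t L)). pose proof (Rabs_pos (ubar L + u t L)). nra. }
assert (B0 : 0 <= Hf a k L ubar u t 0).
{ assert (h00 : 0 <= 0 <= L) by lra.
  destruct (Hub 0 h00) as (hb1 & hb2 & hb3 & hb4).
  destruct (Hu t 0 ht0 h00) as (hu1 & hu2 & hu3 & hu4 & hu5).
  unfold Hf. replace (exp (- (0 / L))) with 1 by (rewrite <- exp_0; f_equal; field; lra).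
  rewrite hbc0. apply (bnd0_alg a k lambda). lra. lra. lra. lra.
  apply Rle_trans with (Rabs (ubar 0) + Rabs (u t 0)). apply Rabs_triang. rewrite Rabs_pos_eq by lra. lra. }
assert (hc2 : c * (2 * L) = 1 / (2 * exp 1 * K1 * k)).
{ unfold c. rewrite hmu. field. repeat split; lra. }
assert (hcp : 0 < c) by (unfold c; apply Rdiv_lt_0_compat; lra).
assert (c * Iu <= c * (2 * L * b t ^ 2 + 2 * L ^ 2 * IP)) by (apply Rmult_le_compat_l; lra).
replace (1 / (2 * exp 1 * K1 * k) * b t ^ 2) with (c * (2 * L) * b t ^ 2) by (rewrite hc2; ring).
nra.
Qed.
Lemma der_RInt (f : R -> R) a x : (forall y, continuous f y) ->
  is_derive (fun y => RInt f a y) x (f x).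
Proof.
intros H. apply (is_derive_RInt (V := R_CompleteNormedModule) f (fun y => RInt f a y) a x).
- exists (mkposreal 1 Rlt_0_1). intros y _. apply (RInt_correct (V := R_CompleteNormedModule)). apply ex_cont. exact H.
- apply H.
Qed.

Lemma mvt2 (f df : R -> R) a b : a < b -> (forall x, is_derive f x (df x)) ->
  exists c, f b - f a = df c * (b - a) /\ a < c < b.
Proof.
intros hab hd. apply MVT_cor2. exact hab. intros c _. apply is_derive_Reals. apply hd.
Qed.

Lemma isd_lin (f g : R -> R) (x df dg c1 : R) : is_derive f x df -> is_derive g x dg ->
  is_derive (fun y => f y + c1 * g y) x (df + c1 * dg).
Proof.
intros H1 H2.
exact (is_derive_plus f (fun y => c1 * g y) x df (c1 * dg) H1
  (is_derive_scal g x c1 dg H2)).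
Qed.

Lemma window (E1f D1 h : R -> R) (mu Cc Tp T t : R) :
  (forall s, is_derive E1f s (D1 s)) -> (forall s, continuous h s) ->
  (forall s, 0 < s < T -> D1 s <= - mu * E1f s + Cc * h s) ->
  0 < Tp -> Tp < t -> t <= T ->
  E1f t - E1f (t - Tp) <= - mu * RInt E1f (t - Tp) t + Cc * RInt h (t - Tp) t.
Proof.
intros hd hh hD hTp ht htT.
assert (cE : forall s, continuous E1f s).
{ intros s. apply (@ex_derive_continuous R_AbsRing R_NormedModule). eexists; apply hd. }
set (q := fun s => E1f s + mu * RInt E1f (t - Tp) s - Cc * RInt h (t - Tp) s).
set (dq := fun s => D1 s + mu * E1f s - Cc * h s).
assert (hq : forall s, is_derive q s (dq s)).
{ intros s. unfold q, dq.
  apply (is_derive_ext (fun s => (E1f s + mu * RInt E1f (t - Tp) s) + (- Cc) * RInt h (t - Tp) s)).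
  intros t0. rewrite Ropp_mult_distr_l_reverse. reflexivity.
  replace (D1 s + mu * E1f s - Cc * h s) with ((D1 s + mu * E1f s) + (- Cc) * h s) by ring.
  apply isd_lin. apply isd_lin. apply hd. apply der_RInt. exact cE. apply der_RInt. exact hh. }
destruct (mvt2 q dq (t - Tp) t ltac:(lra) hq) as [c [hc1 hc2]].
assert (dq c <= 0) by (unfold dq; assert (hc := hD c ltac:(lra)); lra).
assert (q t - q (t - Tp) <= 0) by (rewrite hc1; nra).
unfold q in H0. rewrite !RInt_point in H0. unfold zero in H0; simpl in H0. lra.
Qed.

Lemma Eder (E1f : R -> R) Tp t : (forall s, continuous E1f s) ->
  is_derive (fun t => RInt E1f (t - Tp) t) t (E1f t - E1f (t - Tp)).
Proof.
intros hc.
assert (HC : forall s, RInt E1f 0 s + (-1) * RInt E1f 0 (s - Tp) = RInt E1f (s - Tp) s :> R).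
{ intros s. assert (HH := RInt_Chasles (V := R_CompleteNormedModule) E1f 0 (s - Tp) s (ex_cont _ _ _ hc) (ex_cont _ _ _ hc)).
  change (RInt E1f 0 (s - Tp) + RInt E1f (s - Tp) s = RInt E1f 0 s) in HH. lra. }
apply (is_derive_ext (fun t => RInt E1f 0 t + (-1) * RInt E1f 0 (t - Tp))).
{ intros s. apply HC. }
replace (E1f t - E1f (t - Tp)) with (E1f t + (-1) * E1f (t - Tp)) by ring.
apply isd_lin. apply der_RInt. exact hc.
assert (H := is_derive_comp (fun y => RInt E1f 0 y) (fun y => y - Tp) t (E1f (t - Tp)) 1
  (der_RInt E1f 0 (t - Tp) hc)).
assert (is_derive (fun y : R => y - Tp) t 1) by (auto_derive; auto; ring).
specialize (H H0). change (scal 1 (E1f (t - Tp))) with (1 * E1f (t - Tp)) in H.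
rewrite Rmult_1_l in H. exact H.
Qed.

Lemma gronwall (E E' : R -> R) mu Cg nu Tp T :
  (forall t, is_derive E t (E' t)) ->
  (forall t, Tp < t < T -> E' t <= - mu * E t + Cg * exp (- nu * t)) ->
  0 < mu -> mu < nu -> 0 <= Cg -> 0 < Tp ->
  forall t, Tp < t <= T -> E t <= exp (- mu * (t - Tp)) * (E Tp + Cg / (nu - mu)).
Proof.
intros hd hE hmu hnu hCg hTp t ht.
set (d := nu - mu).
assert (hdp : 0 < d) by (unfold d; lra).
set (p := fun s => exp (mu * s) * E s + Cg / d * exp (- d * s)).
set (dp := fun s => mu * exp (mu * s) * E s + exp (mu * s) * E' s - Cg * exp (- d * s)).
assert (hp : forall s, is_derive p s (dp s)).
{ intros s. unfold p, dp. auto_derive.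
  - eexists; apply hd.
  - change (fun x : R => E x) with E. rewrite (is_derive_unique E s (E' s) (hd s)). field. lra. }
destruct (mvt2 p dp Tp t ltac:(lra) hp) as [c [hc1 hc2]].
assert (hdc : dp c <= 0).
{ unfold dp. assert (h := hE c ltac:(lra)).
  assert (exp (mu * c) * E' c <= exp (mu * c) * (- mu * E c + Cg * exp (- nu * c))).
  { apply Rmult_le_compat_l. left; apply exp_pos. exact h. }
  assert (exp (mu * c) * exp (- nu * c) = exp (- d * c)) by (rewrite <- exp_plus; f_equal; unfold d; ring).
  nra. }
assert (hpt : p t <= p Tp) by (assert (0 <= t - Tp) by lra; nra).
unfold p in hpt.
assert (e1 : exp (mu * t) * exp (- mu * (t - Tp)) = exp (mu * Tp)).
{ rewrite <- exp_plus. f_equal. ring. }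
assert (e2 : exp (- d * Tp) <= exp (mu * Tp)).
{ left; apply exp_increasing. nra. }
assert (h0 : 0 <= Cg / d * exp (- d * t)).
{ apply Rmult_le_pos. apply Rdiv_le_0_compat; lra. left; apply exp_pos. }
assert (hC : 0 <= Cg / d) by (apply Rdiv_le_0_compat; lra).
assert (ht1 : exp (mu * t) * E t <= exp (mu * Tp) * E Tp + Cg / d * exp (mu * Tp)).
{ assert (Cg / d * exp (- d * Tp) <= Cg / d * exp (mu * Tp)) by (apply Rmult_le_compat_l; lra). lra. }
assert (hexp : 0 < exp (mu * t)) by apply exp_pos.
apply Rmult_le_reg_l with (exp (mu * t)). exact hexp.
replace (exp (mu * t) * (exp (- mu * (t - Tp)) * (E Tp + Cg / d))) with
  ((exp (mu * t) * exp (- mu * (t - Tp))) * (E Tp + Cg / d)) by ring.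
rewrite e1. lra.
Qed.

Lemma e1_lower a k M1 w P Q eps : 0 < a -> 1 <= k -> 0 < eps <= 1 -> Rabs w <= a / 2 ->
  M1 <= 3/4 * k * a^2 - a - 1 -> M1 <= k - 1 ->
  M1 * (P^2 + Q^2) <= k * ((a^2 - w^2) * P^2 + Q^2) - 2 * eps * (w * P^2 + Q * P).
Proof.
intros ha hk heps hw hM1 hM2.
assert (hw2 : w^2 <= a^2/4) by (rewrite (sq_abs w); pose proof (Rabs_pos w); nra).
assert (hP2 : 0 <= P^2) by apply pow2_ge_0. assert (hQ2 : 0 <= Q^2) by apply pow2_ge_0.
assert (i1 : 3/4 * k * a^2 * P^2 <= k * (a^2 - w^2) * P^2).
{ apply Rmult_le_compat_r. lra. nra. }
assert (i2 : 2 * eps * (Q * P) <= P^2 + Q^2).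
{ assert (2 * (Q * P) <= P^2 + Q^2) by (pose proof (pow2_ge_0 (Q - P)); nra).
  assert (- (2 * (Q * P)) <= P^2 + Q^2) by (pose proof (pow2_ge_0 (Q + P)); nra).
  assert (0 <= P^2 + Q^2) by lra.
  destruct (Rle_dec 0 (Q * P)). nra. nra. }
assert (i3 : 2 * eps * (w * P^2) <= a * P^2).
{ assert (w <= a / 2) by (eapply Rle_trans; [apply Rle_abs|exact hw]).
  assert (w * P^2 <= a/2 * P^2) by (apply Rmult_le_compat_r; lra).
  destruct (Rle_dec 0 w). 
  - assert (0 <= w * P^2) by nra.
    assert (eps * (w * P^2) <= w * P^2) by nra. nra.
  - assert (w * P^2 <= 0) by nra. nra. }
assert (i4 : M1 * P^2 <= (3/4 * k * a^2 - a - 1) * P^2) by (apply Rmult_le_compat_r; lra).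
assert (i5 : M1 * Q^2 <= (k - 1) * Q^2) by (apply Rmult_le_compat_r; lra).
nra.
Qed.

Definition jf (u : R -> R -> R) (t x : R) : R := (u t x) ^ 2 + (pt u t x) ^ 2 + (px u t x) ^ 2.
Definition djf (u : R -> R -> R) (t x : R) : R :=
  2 * u t x * pt u t x + 2 * pt u t x * pt (pt u) t x + 2 * px u t x * pt (px u) t x.

Lemma jf_derive u : C2_2d u -> forall t x, is_derive (fun s => jf u s x) t (djf u t x).
Proof.
intros H t x. destruct (C2_facts u H t x) as (h1&h2&h3&h4&h5&h6).
unfold jf, djf. auto_derive. tauto. unfold pt, px. ring.
Qed.

Lemma jint_cont u L : C2_2d u -> forall t, continuous (fun s => RInt (fun x => jf u s x) 0 L) t.
Proof.
intros H t.
assert (CU := C2_cont u H).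
assert (cj : forall t x, continuity_2d_pt (jf u) t x).
{ intros t0 x. destruct (CU t0 x) as (c1&c2&c3&c4&c5&c6&c7). unfold jf. c2d. }
assert (cdj : forall t x, continuity_2d_pt (djf u) t x).
{ intros t0 x. destruct (CU t0 x) as (c1&c2&c3&c4&c5&c6&c7). unfold djf. c2d. }
apply (@ex_derive_continuous R_AbsRing R_NormedModule).
eexists.
apply (is_derive_RInt_param (fun s x => jf u s x)).
- exists (mkposreal 1 Rlt_0_1). intros y _ z _. eexists. apply jf_derive. exact H.
- intros z _. apply continuity_2d_pt_ext with (f := djf u).
  + intros s y. symmetry. apply is_derive_unique. apply jf_derive. exact H.
  + apply cdj.
- exists (mkposreal 1 Rlt_0_1). intros y _. apply ex_RInt_c2d. apply cj.
Qed.

Lemma H1_pt a k L ubar u t M1 K1 : C2_2d u -> C1_1d ubar -> 0 < L -> 0 < a -> 1 <= k ->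
  0 < M1 -> M1 <= 3/4 * k * a^2 - a - 1 -> M1 <= k - 1 -> K1 = (1 + 2 * L^2) / M1 ->
  (forall x, 0 <= x <= L -> Rabs (ubar x + u t x) <= a / 2) -> u t L = 0 ->
  RInt (fun x => jf u t x) 0 L <= K1 * E1 a k L ubar u t.
Proof.
intros hC2 hub hL ha hk hM hM1 hM2 hK1 hw huL.
assert (CA := cont_all a k L ubar u hC2 hub hL).
assert (CU := C2_cont u hC2).
assert (cq : forall f : R -> R -> R, (forall x, continuity_2d_pt f t x) -> forall x, continuity_2d_pt (fun t x => f t x ^ 2) t x).
{ intros f hf x. apply c2d_pow. apply hf. }
set (Iu := RInt (fun x => u t x ^ 2) 0 L).
set (IP := RInt (fun x => px u t x ^ 2) 0 L).
set (IQ := RInt (fun x => pt u t x ^ 2) 0 L).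
assert (IU : is_RInt (fun x => u t x ^ 2) 0 L Iu).
{ apply iR_ex. apply (ex_RInt_c2d (fun t x => u t x ^ 2)). apply cq. intros; apply CU. }
assert (IPP : is_RInt (fun x => px u t x ^ 2) 0 L IP).
{ apply iR_ex. apply (ex_RInt_c2d (fun t x => px u t x ^ 2)). apply cq. intros; apply CU. }
assert (IQQ : is_RInt (fun x => pt u t x ^ 2) 0 L IQ).
{ apply iR_ex. apply (ex_RInt_c2d (fun t x => pt u t x ^ 2)). apply cq. intros; apply CU. }
assert (IJ : is_RInt (fun x => jf u t x) 0 L (Iu + IQ + IP)).
{ unfold jf. apply iR_plus. apply iR_plus; assumption. assumption. }
assert (IE : is_RInt (fun x => e1f a k L ubar u t x) 0 L (E1 a k L ubar u t)).
{ apply iR_ex. apply ex_RInt_c2d. intros x; apply CA. }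
assert (IL : is_RInt (fun x => M1 * (px u t x ^ 2 + pt u t x ^ 2)) 0 L (M1 * (IP + IQ))).
{ apply iR_scal. apply iR_plus; assumption. }
assert (LOW : M1 * (IP + IQ) <= E1 a k L ubar u t).
{ apply (is_RInt_le _ _ 0 L _ _ (Rlt_le _ _ hL) IL IE).
  intros x hx. unfold e1f. apply e1_lower; try lra.
  split. apply exp_pos. rewrite <- exp_0. apply exp_le.
  assert (0 <= x / L) by (apply Rdiv_le_0_compat; lra). lra.
  apply hw; lra. }
assert (PO : Iu <= 2 * L * (u t L) ^ 2 + 2 * L ^ 2 * IP).
{ apply (poincare (fun y => u t y) (fun y => px u t y) L hL).
  intros x. apply Derive_correct. apply (C2_facts u hC2 t x).
  intros x. apply (c2d_1d (px u)). apply CU. }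
rewrite huL in PO.
assert (hIQ : 0 <= IQ) by (apply RInt_ge_0; [lra | exists IQ; exact IQQ | intros; apply pow2_ge_0]).
assert (hIP : 0 <= IP) by (apply RInt_ge_0; [lra | exists IP; exact IPP | intros; apply pow2_ge_0]).
rewrite (is_RInt_unique _ _ _ _ IJ).
assert (IP + IQ <= E1 a k L ubar u t / M1).
{ apply Rmult_le_reg_l with M1. lra. unfold Rdiv. rewrite (Rmult_comm (E1 a k L ubar u t)), <- Rmult_assoc, Rinv_r by lra. lra. }
rewrite hK1.
assert (Iu + IQ + IP <= (1 + 2 * L^2) * (IP + IQ)) by (simpl in PO; nra).
assert ((1 + 2 * L^2) * (IP + IQ) <= (1 + 2 * L^2) * (E1 a k L ubar u t / M1)) by (apply Rmult_le_compat_l; nra).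
unfold Rdiv in *. lra.
Qed.

Lemma Rmin_le_l' x y z : z <= Rmin x y -> z <= x.
Proof. intros H. eapply Rle_trans. exact H. apply Rmin_l. Qed.
Lemma Rmin_le_r' x y z : z <= Rmin x y -> z <= y.
Proof. intros H. eapply Rle_trans. exact H. apply Rmin_r. Qed.
Lemma Rmax_le_l' x y z : Rmax x y <= z -> x <= z.
Proof. intros H. eapply Rle_trans. apply Rmax_l. exact H. Qed.
Lemma Rmax_le_r' x y z : Rmax x y <= z -> y <= z.
Proof. intros H. eapply Rle_trans. apply Rmax_r. exact H. Qed.

Theorem theorem2
  (a theta L lambda k : R)
  (ha : 0 < a) (htheta : 0 <= theta) (hL : 0 < L)
  (hlam : 1 / 2 < lambda < 1)
  (hk : k >= Rmax 1 (Rmax (4 / 3 * (1 / a + 1 / a ^ 2)) (1 / (lambda * a))))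
  (ubar : R -> R) (hubC1 : C1_1d ubar)
  (hubpos : forall x, 0 <= x <= L -> ubar x > 0)
  (hubode : forall x, 0 <= x <= L ->
     Derive ubar x = theta / 2 * (Rabs (ubar x) * (ubar x) ^ 2) / (a ^ 2 - (ubar x) ^ 2))
  (Tp T : R) (hTp : 0 < Tp) (hT : T > Tp)
  (b : R -> R) (hbC2 : C2_1d b)
  (u : R -> R -> R) (huC2 : C2_2d u)
  (nu Cnu : R) :
  let e := exp 1 in
  let mu := 1 / (4 * e * L * k) in
  let C0 := 12 * k + 4 * (k + 1) * (18 + 13 * theta + 1 / a ^ 2 * (8 + 6 * theta)) + 10 in
  let M1 := Rmin (3 / 4 * k * a ^ 2 - a - 1) (k - 1) in
  let K1 := (1 + 2 * L ^ 2) / M1 in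
  (forall x, 0 <= x <= L ->
     ubar x <= Rmin 1 (Rmin (1 / (4 * k * e)) (Rmin ((1 - lambda) * (a / 2)) (mu / (C0 * K1))))
     /\ Derive ubar x <= Rmin 1 (mu / (C0 * K1))) ->
  (* the PDE on [0,T] x [0,L] *)
  (forall t x, 0 <= t <= T -> 0 <= x <= L ->
     pt (pt u) t x + 2 * (ubar x + u t x) * px (pt u) t x
     - (a ^ 2 - (ubar x + u t x) ^ 2) * px (px u) t x
     = Ftilde theta (u t x + ubar x) (px u t x + Derive ubar x) (pt u t x)
       - (a ^ 2 - (ubar x + u t x) ^ 2) / (a ^ 2 - (ubar x) ^ 2)
         * Ftilde theta (ubar x) (Derive ubar x) 0) ->
  (* boundary conditions *)
  (forall t, 0 <= t <= T -> px u t 0 = k * pt u t 0 /\ u t L = b t) ->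
  (* smallness of the solution *)
  (forall t x, 0 <= t <= T -> 0 <= x <= L ->
     Rabs (u t x) <= Rmin (ubar 0) (Rmin ((1 - lambda) * (a / 2)) (1 / (4 * k * e)))
     /\ Rmax (Rabs (u t x)) (Rmax (Rabs (px u t x)) (Rabs (pt u t x)))
        <= Rmin 1 (mu / (C0 * K1))) ->
  (* decay of the boundary data *)
  nu > mu -> Cnu > 0 ->
  (forall t, Tp < t < T ->
     RInt (fun tau => (b tau) ^ 2 + (Derive b tau) ^ 2) (t - Tp) t
     <= Cnu * exp (- nu * t)) ->
  let delta := nu - mu in
  let Cg := (4 / 3 * e * a ^ 2 * k ^ 2 + 1 / (2 * e * K1 * k)) * Cnu in
  (forall t, Tp < t < T ->
     Eint a k L Tp ubar u t
     <= exp (- mu * (t - Tp)) * (Eint a k L Tp ubar u Tp + Cg / delta))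
  /\
  ((forall t, T - Tp <= t <= T -> b t = 0) ->
     H1sq u (T - Tp) T L
     <= K1 * exp (- mu * (T - Tp)) * (Eint a k L Tp ubar u Tp + Cg / delta)).
Proof.
intros e mu C0 M1 K1 Hubb Hpde Hbc Hsm hnu hCnu Hb delta Cg.
assert (hee : e = exp 1) by reflexivity.
assert (hmu : mu = 1 / (4 * exp 1 * L * k)) by reflexivity.
assert (hC0 : C0 = 12 * k + 4 * (k + 1) * (18 + 13 * theta + 1 / a ^ 2 * (8 + 6 * theta)) + 10) by reflexivity.
assert (hM1a : M1 <= 3 / 4 * k * a ^ 2 - a - 1) by apply Rmin_l.
assert (hM1b : M1 <= k - 1) by apply Rmin_r.
assert (hM1c : M1 = 3 / 4 * k * a ^ 2 - a - 1 \/ M1 = k - 1).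
{ unfold M1, Rmin. destruct (Rle_dec _ _); auto. }
assert (hK1 : K1 = (1 + 2 * L ^ 2) / M1) by reflexivity.
assert (hdelta : delta = nu - mu) by reflexivity.
assert (hCg : Cg = (4 / 3 * exp 1 * a ^ 2 * k ^ 2 + 1 / (2 * exp 1 * K1 * k)) * Cnu) by reflexivity.
clearbody e mu C0 M1 K1 delta Cg. subst e.
assert (hk1 : 1 <= k) by (apply Rge_le in hk; exact (Rmax_le_l' _ _ _ hk)).
assert (hk2 : 4 / 3 * (1 / a + 1 / a ^ 2) <= k) by (apply Rge_le in hk; exact (Rmax_le_l' _ _ _ (Rmax_le_r' _ _ _ hk))).
assert (hk3 : 1 / (lambda * a) <= k) by (apply Rge_le in hk; exact (Rmax_le_r' _ _ _ (Rmax_le_r' _ _ _ hk))).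
assert (hla : 0 < lambda * a) by nra.
assert (hka : k * (lambda * a) >= 1).
{ apply Rle_ge. apply Rmult_le_compat_r with (r := lambda * a) in hk3; [|lra].
  unfold Rdiv in hk3. rewrite Rmult_1_l, Rinv_l in hk3 by lra. lra. }
assert (hka2 : 3 / 4 * k * a ^ 2 - a - 1 >= 0).
{ apply Rmult_le_compat_r with (r := a ^ 2) in hk2; [|nra].
  replace (4 / 3 * (1 / a + 1 / a ^ 2) * a ^ 2) with (4 / 3 * (a + 1)) in hk2 by (field; lra). nra. }
assert (hM0 : 0 <= M1) by (destruct hM1c; lra).
assert (he : 0 < exp 1) by apply exp_pos.
assert (hmup : 0 < mu) by (rewrite hmu; apply Rdiv_lt_0_compat; [lra|]; apply Rmult_lt_0_compat; [|lra]; apply Rmult_lt_0_compat; lra).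
assert (ha2 : 0 <= 1 / a ^ 2 * (8 + 6 * theta)) by (apply Rmult_le_pos; [apply Rlt_le, Rdiv_lt_0_compat; nra | lra]).
assert (hC0p : 0 < C0) by (rewrite hC0; nra).
set (eta0 := mu / (C0 * K1)) in *.
assert (hub0 : 0 <= 0 <= L) by lra.
assert (heta0 : 0 < eta0).
{ destruct (Hubb 0 hub0) as [h _]. assert (hp := hubpos 0 hub0).
  assert (ubar 0 <= eta0) by exact (Rmin_le_r' _ _ _ (Rmin_le_r' _ _ _ (Rmin_le_r' _ _ _ h))). lra. }
assert (hM : 0 < M1).
{ destruct hM0 as [h|h]; auto. exfalso.
  assert (K1 = 0) by (rewrite hK1, <- h; unfold Rdiv; rewrite Rinv_0; ring).
  unfold eta0 in heta0. rewrite H, Rmult_0_r in heta0. unfold Rdiv in heta0. rewrite Rinv_0, Rmult_0_r in heta0. lra. }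
assert (hK1p : 0 < K1) by (rewrite hK1; apply Rdiv_lt_0_compat; nra).
set (eta := Rmin 1 eta0).
assert (heta1 : eta <= 1) by apply Rmin_l.
assert (heta2 : eta <= eta0) by apply Rmin_r.
assert (HUB : forall x, 0 <= x <= L -> 0 < ubar x <= eta /\ ubar x <= (1 - lambda) * (a / 2) /\
      ubar x <= 1 / (4 * k * exp 1) /\ Rabs (Derive ubar x) <= eta).
{ intros x hx. destruct (Hubb x hx) as [h1 h2]. assert (hp := hubpos x hx).
  assert (h3 : ubar x <= (1 - lambda) * (a / 2)) by exact (Rmin_le_l' _ _ _ (Rmin_le_r' _ _ _ (Rmin_le_r' _ _ _ h1))).
  assert (h4 : ubar x <= eta).
  { apply Rmin_glb. exact (Rmin_le_l' _ _ _ h1). exact (Rmin_le_r' _ _ _ (Rmin_le_r' _ _ _ (Rmin_le_r' _ _ _ h1))). }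
  repeat split; try lra.
  exact (Rmin_le_l' _ _ _ (Rmin_le_r' _ _ _ h1)).
  assert (hs0 : 0 <= Derive ubar x).
  { rewrite hubode by exact hx. apply Rmult_le_pos.
    apply Rmult_le_pos. lra. apply Rmult_le_pos. apply Rabs_pos. apply pow2_ge_0.
    left. apply Rinv_0_lt_compat. nra. }
  rewrite Rabs_pos_eq by exact hs0. exact h2. }
assert (HU : forall t x, 0 <= t <= T -> 0 <= x <= L ->
      Rabs (u t x) <= eta /\ Rabs (u t x) <= (1 - lambda) * (a / 2) /\
      Rabs (u t x) <= 1 / (4 * k * exp 1) /\ Rabs (px u t x) <= eta /\ Rabs (pt u t x) <= eta).
{ intros t x ht hx. destruct (Hsm t x ht hx) as [h1 h2].
  repeat split.
  - exact (Rmax_le_l' _ _ _ h2).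
  - exact (Rmin_le_l' _ _ _ (Rmin_le_r' _ _ _ h1)).
  - exact (Rmin_le_r' _ _ _ (Rmin_le_r' _ _ _ h1)).
  - exact (Rmax_le_l' _ _ _ (Rmax_le_r' _ _ _ h2)).
  - exact (Rmax_le_r' _ _ _ (Rmax_le_r' _ _ _ h2)). }
assert (EI := E1_ineq a theta L lambda k ubar u b T mu eta0 eta C0 M1 K1 huC2 hubC1 hL ha htheta hlam hk1 hka hM hM1a hM1b hmu hK1 hC0 eq_refl heta1 heta2 HUB HU Hpde Hbc).
set (E1t := fun t => E1 a k L ubar u t).
set (D1 := fun t => RInt (fun x => Dtf a k L ubar u t x) 0 L).
assert (hD : forall t, is_derive E1t t (D1 t)) by (intros; apply dE1; auto).
assert (cE : forall t, continuous E1t t).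
{ intros t. apply (@ex_derive_continuous R_AbsRing R_NormedModule). eexists; apply hD. }
set (h := fun s => b s ^ 2 + Derive b s ^ 2).
assert (ch : forall s, continuous h s).
{ intros s. destruct (hbC2 s) as (h1 & h2 & _).
  assert (cb : continuous b s) by exact (@ex_derive_continuous R_AbsRing R_NormedModule b s h1).
  assert (cdb : continuous (Derive b) s) by exact (@ex_derive_continuous R_AbsRing R_NormedModule _ s h2).
  unfold h. apply (continuous_plus (fun s => b s ^ 2) (fun s => Derive b s ^ 2)).
  apply (continuous_mult (K := R_AbsRing) b (fun y => b y ^ 1)). exact cb.
  apply (continuous_mult (K := R_AbsRing) b (fun _ => 1)). exact cb. apply continuous_const.
  apply (continuous_mult (K := R_AbsRing) (Derive b) (fun y => Derive b y ^ 1)). exact cdb.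
  apply (continuous_mult (K := R_AbsRing) (Derive b) (fun _ => 1)). exact cdb. apply continuous_const. }
set (c1 := 4 / 3 * exp 1 * a ^ 2 * k ^ 2).
set (c2 := 1 / (2 * exp 1 * K1 * k)).
assert (hc1 : 0 <= c1) by (unfold c1; pose proof (pow2_ge_0 a); pose proof (pow2_ge_0 k); apply Rmult_le_pos; [apply Rmult_le_pos; [apply Rmult_le_pos|]|]; lra).
assert (hc2 : 0 <= c2) by (unfold c2; left; apply Rdiv_lt_0_compat; [lra|]; repeat apply Rmult_lt_0_compat; lra).
assert (hDI : forall s, 0 < s < T -> D1 s <= - mu * E1t s + (c1 + c2) * h s).
{ intros s hs. assert (X := EI s hs). fold c1 c2 in X. unfold h.
  assert (0 <= b s ^ 2) by apply pow2_ge_0. assert (0 <= Derive b s ^ 2) by apply pow2_ge_0.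
  unfold D1, E1t. nra. }
assert (hCgp : 0 <= Cg) by (rewrite hCg; fold c1 c2; nra).
assert (GR := gronwall (fun t => Eint a k L Tp ubar u t) (fun t => E1t t - E1t (t - Tp)) mu Cg nu Tp T).
assert (GR2 : forall t, Tp < t <= T -> Eint a k L Tp ubar u t <= exp (- mu * (t - Tp)) * (Eint a k L Tp ubar u Tp + Cg / delta)).
{ rewrite hdelta. apply GR; try lra.
  - intros t. unfold Eint. apply (Eder E1t Tp t cE).
  - intros t ht.
    assert (W := window E1t D1 h mu (c1 + c2) Tp T t hD ch hDI hTp (proj1 ht) (Rlt_le _ _ (proj2 ht))).
    assert (Hbt := Hb t ht). fold h in Hbt.
    assert ((c1 + c2) * RInt h (t - Tp) t <= (c1 + c2) * (Cnu * exp (- nu * t))) by (apply Rmult_le_compat_l; lra).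
    replace (Cg * exp (- nu * t)) with ((c1 + c2) * (Cnu * exp (- nu * t))) by (rewrite hCg; fold c1 c2; ring).
    unfold Eint. fold E1t. lra. }
split.
- intros t ht. apply GR2. lra.
- intros hb0.
  assert (hTT : Tp < T <= T) by lra.
  assert (G := GR2 T hTT).
  assert (hH : H1sq u (T - Tp) T L <= RInt (fun t => K1 * E1t t) (T - Tp) T).
  { unfold H1sq. apply RInt_le. lra.
    apply ex_cont. intros t. apply (jint_cont u L huC2 t).
    apply ex_cont. intros t. apply (continuous_mult (K := R_AbsRing) (fun _ => K1) E1t). apply continuous_const. apply cE.
    intros t ht. apply (H1_pt a k L ubar u t M1 K1 huC2 hubC1 hL ha hk1 hM hM1a hM1b hK1).
    + intros x hx. destruct (HUB x hx) as (h1 & h2 & _). destruct (HU t x ltac:(lra) hx) as (_ & h3 & _).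
      apply Rle_trans with (Rabs (ubar x) + Rabs (u t x)). apply Rabs_triang. rewrite Rabs_pos_eq by lra. nra.
    + destruct (Hbc t ltac:(lra)) as [_ ->]. apply hb0. lra. }
  assert (hR : RInt (fun t => K1 * E1t t) (T - Tp) T = K1 * Eint a k L Tp ubar u T).
  { apply is_RInt_unique. apply iR_scal. apply iR_ex. apply ex_cont. exact cE. }
  rewrite hR in hH.
  assert (K1 * Eint a k L Tp ubar u T <= K1 * (exp (- mu * (T - Tp)) * (Eint a k L Tp ubar u Tp + Cg / delta))) by (apply Rmult_le_compat_l; lra).
  lra.
Qed.
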